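(* Assume that the dual pair $(E,E')$ is $(\mathcal{K})$ over $\mathbf{A}$ (in the sense defined in the context). Then: (1) If the left $\mathbf{A}$-module ${}_{\mathbf{A}}E'$ is injective, then the right $\mathbf{A}$-module $E_{\mathbf{A}}$ is flat. (2) Conversely, if $E_{\mathbf{A}}$ is flat, then ${}_{\mathbf{A}}E'$ is $1$-injective.
   Context: Let $\mathbf{k}=\mathbb{R}$ or $\mathbb{C}$ and let $\mathbf{A}$ be a (not necessarily commutative) Noetherian domain which is a $\mathbf{k}$-algebra. Let $E,E'$ be $\mathbf{k}$-vector spaces with a nondegenerate bilinear form $\langle -,-\rangle:E\times E'\to\mathbf{k}$; $E$ and $E'$ carry the weak topologies $\sigma(E,E')$ and $\sigma(E',E)$ ($(E,E')$ is a dual pair). Assume $E'$ is a left $\mathbf{A}$-module which is semitopological, i.e. each map $E'\to E'$, $x'\mapsto a\,x'$ ($a\in\mathbf{A}$) is continuous. Then $E$ is a right $\mathbf{A}$-module via $\langle x\,a,x'\rangle=\langle x,a\,x'\rangle$ for $x\in E$, $x'\in E'$, $a\in\mathbf{A}$, and all maps $x\mapsto x\,a$ are continuous. The bracket extends to $E^{1\times k}\times (E')^{k}$ (row vectors times column vectors), making $(E^{1\times k},(E')^k)$ a dual pair. For a matrix $P\in\mathbf{A}^{q\times k}$, write $P\bullet:(E')^k\to(E')^q$, $x'\mapsto P\,x'$ (continuous), whose transpose is $\bullet P:E^{1\times q}\to E^{1\times k}$, $x\mapsto x\,P$; similarly $\bullet P:\mathbf{A}^{1\times q}\to\mathbf{A}^{1\times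 k}$. The dual pair $(E,E')$ is called $(\mathcal{K})$ (Köthe) over $\mathbf{A}$ if for all positive integers $k,r$ and every $P\in\mathbf{A}^{k\times r}$: $\bullet P:E^{1\times k}\to E^{1\times r}$ has closed image if and only if $P\bullet:(E')^r\to(E')^k$ has closed image. For $n\ge 0$, ${}_{\mathbf{A}}E'$ is called $n$-injective if for all integers $k_1,\dots,k_{3+n}$ and matrices $P_i\in\mathbf{A}^{k_i\times k_{i+1}}$ ($1\le i\le 2+n$) such that the sequence $\mathbf{A}^{1\times k_1}\xrightarrow{\bullet P_1}\mathbf{A}^{1\times k_2}\xrightarrow{\bullet P_2}\mathbf{A}^{1\times k_3}\to\cdots\xrightarrow{\bullet P_{2+n}}\mathbf{A}^{1\times k_{3+n}}$ is exact, the sequence $(E')^{k_3}\xrightarrow{P_2\bullet}(E')^{k_2}\xrightarrow{P_1\bullet}(E')^{k_1}$ is exact. ($0$-injective is equivalent to injective.) *)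

(* Defs.v *)
From Stdlib Require Import Reals List.
From mathcomp Require Import all_boot.
Set Implicit Arguments.
Unset Strict Implicit.

Inductive scalars := RR | CC.

Definition K (s : scalars) : Type :=
  match s with RR => R | CC => (R * R)%type end.

Definition k0 (s : scalars) : K s :=
  match s return K s with RR => R0 | CC => (R0, R0) end.
Definition k1 (s : scalars) : K s :=
  match s return K s with RR => R1 | CC => (R1, R0) end.
Definition kadd (s : scalars) : K s -> K s -> K s :=
  match s return K s -> K s -> K s with
  | RR => Rplus
  | CC => fun x y => (Rplus (fst x) (fst y), Rplus (snd x) (snd y)) end.
Definition kopp (s : scalars) : K s -> K s :=
  match s return K s -> K s with
  | RR => Ropp
  | CC => fun x => (Ropp (fst x), Ropp (snd x)) end.
Definition kmul (s : scalars) : K s -> K s -> K s :=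
  match s return K s -> K s -> K s with
  | RR => Rmult
  | CC => fun x y => (Rminus (Rmult (fst x) (fst y)) (Rmult (snd x) (snd y)),
                      Rplus (Rmult (fst x) (snd y)) (Rmult (snd x) (fst y))) end.
Definition ksub (s : scalars) (x y : K s) : K s := kadd x (kopp y).
Definition kabs (s : scalars) : K s -> R :=
  match s return K s -> R with
  | RR => Rabs
  | CC => fun x => sqrt (Rplus (Rmult (fst x) (fst x)) (Rmult (snd x) (snd x))) end.

Record VS (s : scalars) := {
  vcar :> Type;
  v0 : vcar;
  vadd : vcar -> vcar -> vcar;
  vopp : vcar -> vcar;
  vscal : K s -> vcar -> vcar;
  vaddA : forall x y z, vadd x (vadd y z) = vadd (vadd x y) z;
  vaddC : forall x y, vadd x y = vadd y x;
  vadd0 : forall x, vadd v0 x = x;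
  vaddN : forall x, vadd (vopp x) x = v0;
  vscalA : forall a b x, vscal a (vscal b x) = vscal (kmul a b) x;
  vscal1 : forall x, vscal (k1 s) x = x;
  vscalDl : forall a b x, vscal (kadd a b) x = vadd (vscal a x) (vscal b x);
  vscalDr : forall a x y, vscal a (vadd x y) = vadd (vscal a x) (vscal a y)
}.
Arguments v0 {s} _.
Arguments vadd {s} _ _ _.
Arguments vopp {s} _ _.
Arguments vscal {s} _ _ _.

Record Alg (s : scalars) := {
  acar :> Type;
  a0 : acar;
  a1 : acar;
  aadd : acar -> acar -> acar;
  aopp : acar -> acar;
  amul : acar -> acar -> acar;
  ascal : K s -> acar -> acar;
  aaddA : forall x y z, aadd x (aadd y z) = aadd (aadd x y) z;
  aaddC : forall x y, aadd x y = aadd y x;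
  aadd0 : forall x, aadd a0 x = x;
  aaddN : forall x, aadd (aopp x) x = a0;
  amulA : forall x y z, amul x (amul y z) = amul (amul x y) z;
  amul1l : forall x, amul a1 x = x;
  amul1r : forall x, amul x a1 = x;
  amulDl : forall x y z, amul (aadd x y) z = aadd (amul x z) (amul y z);
  amulDr : forall x y z, amul x (aadd y z) = aadd (amul x y) (amul x z);
  ascalA : forall a b x, ascal a (ascal b x) = ascal (kmul a b) x;
  ascal1 : forall x, ascal (k1 s) x = x;
  ascalDl : forall a b x, ascal (kadd a b) x = aadd (ascal a x) (ascal b x);
  ascalDr : forall a x y, ascal a (aadd x y) = aadd (ascal a x) (ascal a y);
  ascal_mull : forall a x y, amul (ascal a x) y = ascal a (amul x y);
  ascal_mulr : forall a x y, amul x (ascal a y) = ascal a (amul x y)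
}.
Arguments a0 {s} _.
Arguments a1 {s} _.
Arguments aadd {s} _ _ _.
Arguments aopp {s} _ _.
Arguments amul {s} _ _ _.
Arguments ascal {s} _ _ _.

Section AlgDefs.
Variables (s : scalars) (A : Alg s).

Definition is_domain : Prop :=
  a1 A <> a0 A /\
  forall x y : A, amul A x y = a0 A -> x = a0 A \/ y = a0 A.

Definition left_ideal (I : A -> Prop) : Prop :=
  I (a0 A) /\ (forall x y, I x -> I y -> I (aadd A x y)) /\
  (forall x, I x -> I (aopp A x)) /\ (forall x y, I y -> I (amul A x y)).

Definition right_ideal (I : A -> Prop) : Prop :=
  I (a0 A) /\ (forall x y, I x -> I y -> I (aadd A x y)) /\
  (forall x, I x -> I (aopp A x)) /\ (forall x y, I x -> I (amul A x y)).

Definition acc_chain (ideal : (A -> Prop) -> Prop) : Prop :=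
  forall I : nat -> A -> Prop,
    (forall n, ideal (I n)) ->
    (forall n x, I n x -> I n.+1 x) ->
    exists N, forall n x, (N <= n)%N -> I n x -> I N x.

Definition noetherian_domain : Prop :=
  is_domain /\ acc_chain left_ideal /\ acc_chain right_ideal.

Unset Implicit Arguments.
Record LMod := {
  mcar :> Type;
  m0 : mcar;
  madd : mcar -> mcar -> mcar;
  mopp : mcar -> mcar;
  mact : A -> mcar -> mcar;
  maddA : forall x y z, madd x (madd y z) = madd (madd x y) z;
  maddC : forall x y, madd x y = madd y x;
  madd0 : forall x, madd m0 x = x;
  maddN : forall x, madd (mopp x) x = m0;
  mactA : forall a b x, mact (amul A a b) x = mact a (mact b x);
  mact1 : forall x, mact (a1 A) x = x;
  mactDl : forall a b x, mact (aadd A a b) x = madd (mact a x) (mact b x);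
  mactDr : forall a x y, mact a (madd x y) = madd (mact a x) (mact a y)
}.

Record AbGroup := {
  gcar :> Type;
  g0 : gcar;
  gadd : gcar -> gcar -> gcar;
  gopp : gcar -> gcar;
  gaddA : forall x y z, gadd x (gadd y z) = gadd (gadd x y) z;
  gaddC : forall x y, gadd x y = gadd y x;
  gadd0 : forall x, gadd g0 x = x;
  gaddN : forall x, gadd (gopp x) x = g0
}.

Set Implicit Arguments.
Definition lmod_lin (M N : LMod) (f : M -> N) : Prop :=
  (forall x y, f (madd M x y) = madd N (f x) (f y)) /\
  (forall a x, f (mact M a x) = mact N a (f x)).

Definition lin_into (M : LMod) (T : Type) (tadd : T -> T -> T)
  (tact : A -> T -> T) (f : M -> T) : Prop :=
  (forall x y, f (madd M x y) = tadd (f x) (f y)) /\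
  (forall a x, f (mact M a x) = tact a (f x)).

Definition injective_lmod (T : Type) (tadd : T -> T -> T)
  (tact : A -> T -> T) : Prop :=
  forall (M N : LMod) (i : M -> N) (f : M -> T),
    lmod_lin i -> (forall x y, i x = i y -> x = y) ->
    lin_into tadd tact f ->
    exists g : N -> T, lin_into tadd tact g /\ forall x, g (i x) = f x.

(* An element of E (x)_A M is the class of a finite formal sum
   sum_k e_k (x) m_k, represented by the list of pairs; it is zero iff it is
   killed by every A-balanced biadditive map into an abelian group
   (universal property of the tensor product). *)
Definition balanced (Et : Type) (eadd : Et -> Et -> Et) (eact : Et -> A -> Et)
  (M : LMod) (G : AbGroup) (b : Et -> M -> G) : Prop :=
  (forall x y m, b (eadd x y) m = gadd G (b x m) (b y m)) /\
  (forall x m n, b x (madd M m n) = gadd G (b x m) (b x n)) /\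
  (forall x a m, b (eact x a) m = b x (mact M a m)).

Definition gsum (G : AbGroup) (l : list G) : G := foldr (gadd G) (g0 G) l.

Definition tensor_zero (Et : Type) (eadd : Et -> Et -> Et)
  (eact : Et -> A -> Et) (M : LMod) (t : list (Et * M)) : Prop :=
  forall (G : AbGroup) (b : Et -> M -> G), balanced eadd eact b ->
    gsum (map (fun p => b p.1 p.2) t) = g0 G.

Definition flat_rmod (Et : Type) (eadd : Et -> Et -> Et)
  (eact : Et -> A -> Et) : Prop :=
  forall (M N : LMod) (i : M -> N),
    lmod_lin i -> (forall x y, i x = i y -> x = y) ->
    forall t : list (Et * M),
      tensor_zero eadd eact (map (fun p => (p.1, i p.2)) t) ->
      tensor_zero eadd eact t.

Definition rowmulA (q k : nat) (x : 'I_q -> A) (P : 'I_q -> 'I_k -> A)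
  : 'I_k -> A :=
  fun j => \big[aadd A / a0 A]_(i < q) amul A (x i) (P i j).

Definition exactA (a b c : nat) (P : 'I_a -> 'I_b -> A) (Q : 'I_b -> 'I_c -> A)
  : Prop :=
  forall y : 'I_b -> A,
    (forall j, rowmulA y Q j = a0 A) <-> exists x, forall j, y j = rowmulA x P j.

End AlgDefs.

Section DualPair.
Variables (s : scalars) (A : Alg s) (E E' : VS s).

Definition bilinear (p : E -> E' -> K s) : Prop :=
  (forall x y z, p (vadd E x y) z = kadd (p x z) (p y z)) /\
  (forall c x z, p (vscal E c x) z = kmul c (p x z)) /\
  (forall x y z, p x (vadd E' y z) = kadd (p x y) (p x z)) /\
  (forall c x z, p x (vscal E' c z) = kmul c (p x z)).

Definition nondegenerate (p : E -> E' -> K s) : Prop :=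
  (forall x, (forall y, p x y = k0 s) -> x = v0 E) /\
  (forall y, (forall x, p x y = k0 s) -> y = v0 E').

Definition lmod_action (act : A -> E' -> E') : Prop :=
  (forall a b x, act (amul A a b) x = act a (act b x)) /\
  (forall x, act (a1 A) x = x) /\
  (forall a b x, act (aadd A a b) x = vadd E' (act a x) (act b x)) /\
  (forall a x y, act a (vadd E' x y) = vadd E' (act a x) (act a y)) /\
  (forall c a x, act (ascal A c a) x = vscal E' c (act a x)).
End DualPair.

Definition weak_open (s : scalars) (X Y : Type) (p : X -> Y -> K s)
  (U : X -> Prop) : Prop :=
  forall x, U x ->
    exists (ys : list Y) (eps : R), Rlt R0 eps /\
      forall z, (forall y, In y ys -> Rlt (kabs (ksub (p z y) (p x y))) eps) ->
        U z.

Definition weak_closed (s : scalars) (X Y : Type) (p : X -> Y -> K s)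
  (S : X -> Prop) : Prop :=
  weak_open p (fun x => ~ S x).

Definition weak_continuous (s : scalars) (X Y : Type) (p : X -> Y -> K s)
  (f : X -> X) : Prop :=
  forall U, weak_open p U -> weak_open p (fun x => U (f x)).

Section Rows.
Variables (s : scalars) (A : Alg s) (E E' : VS s) (p : E -> E' -> K s)
  (act : A -> E' -> E') (eact : E -> A -> E).

Definition pairn (n : nat) (x : 'I_n -> E) (y : 'I_n -> E') : K s :=
  \big[@kadd s / k0 s]_(i < n) p (x i) (y i).

Definition rowmulE (q k : nat) (x : 'I_q -> E) (P : 'I_q -> 'I_k -> A)
  : 'I_k -> E :=
  fun j => \big[vadd E / v0 E]_(i < q) eact (x i) (P i j).

Definition matmulE' (q k : nat) (P : 'I_q -> 'I_k -> A) (y : 'I_k -> E')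
  : 'I_q -> E' :=
  fun i => \big[vadd E' / v0 E']_(j < k) act (P i j) (y j).

Definition Kothe : Prop :=
  forall (k r : nat), (0 < k)%N -> (0 < r)%N ->
  forall P : 'I_k -> 'I_r -> A,
    weak_closed (@pairn r)
      (fun z : 'I_r -> E => exists x : 'I_k -> E, forall j, z j = rowmulE x P j)
    <->
    weak_closed (fun (y : 'I_k -> E') (x : 'I_k -> E) => pairn x y)
      (fun z : 'I_k -> E' => exists y : 'I_r -> E', forall i, z i = matmulE' P y i).

Definition exactE' (a b c : nat) (Q : 'I_b -> 'I_c -> A) (P : 'I_a -> 'I_b -> A)
  : Prop :=
  forall y : 'I_b -> E',
    (forall i, matmulE' P y i = v0 E') <-> exists z, forall j, y j = matmulE' Q z j.

(* n-injectivity of _A E' (0-based indices: k_0..k_{n+2}, P_0..P_{n+1}) *)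
Definition n_injective (n : nat) : Prop :=
  forall (ks : nat -> nat) (Ps : forall i, 'I_(ks i) -> 'I_(ks i.+1) -> A),
    (forall i, (i <= n)%N -> exactA (Ps i) (Ps i.+1)) ->
    exactE' (Ps 1%N) (Ps 0%N).
End Rows.

(* Main.v *)
Require Import Defs.
From Stdlib Require Import Reals List.
From mathcomp Require Import all_boot.
From HB Require Import structures.
From Stdlib Require Import Lra Psatz ClassicalEpsilon.
From mathcomp Require Import all_algebra.
From mathcomp Require Import boolp.
Require Import Defs.
Set Implicit Arguments. Unset Strict Implicit. Unset Printing Implicit Defensive.

Local Open Scope R_scope.
Definition kinv (s : scalars) : K s -> K s :=
  match s return K s -> K s with
  | RR => Rinv
  | CC => fun x => (fst x / (fst x * fst x + snd x * snd x),
                    - snd x / (fst x * fst x + snd x * snd x)) end.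

Section KField.
Variable s : scalars.

Lemma kaddA' (x y z : K s) : kadd x (kadd y z) = kadd (kadd x y) z.
Proof. case: s x y z => /= x y z; [ring| f_equal; ring]. Qed.
Lemma kaddC' (x y : K s) : kadd x y = kadd y x.
Proof. case: s x y => /= x y; [ring| f_equal; ring]. Qed.
Lemma kadd0' (x : K s) : kadd (k0 s) x = x.
Proof. case: s x => /= [x|[a b]] /=; [ring| f_equal; ring]. Qed.
Lemma kaddN' (x : K s) : kadd (kopp x) x = k0 s.
Proof. case: s x => /= x; [ring| f_equal; ring]. Qed.
Lemma kmulA' (x y z : K s) : kmul x (kmul y z) = kmul (kmul x y) z.
Proof. case: s x y z => /= x y z; [ring| f_equal; unfold Rminus; ring]. Qed.
Lemma kmulC' (x y : K s) : kmul x y = kmul y x.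
Proof. case: s x y => /= x y; [ring| f_equal; unfold Rminus; ring]. Qed.
Lemma kmul1' (x : K s) : kmul (k1 s) x = x.
Proof. case: s x => /= [x|[a b]] /=; [ring| f_equal; unfold Rminus; ring]. Qed.
Lemma kmulDl' (x y z : K s) : kmul (kadd x y) z = kadd (kmul x z) (kmul y z).
Proof. case: s x y z => /= x y z; [ring| f_equal; unfold Rminus; ring]. Qed.
Lemma k10' : k1 s <> k0 s.
Proof. case: s => /=; [lra| case; lra]. Qed.
Lemma kinvV' (x : K s) : x <> k0 s -> kmul (kinv x) x = k1 s.
Proof.
case: s x => /= [x|[a b]] /= H; first by field.
have hn : a * a + b * b <> 0.
  move=> h; apply: H; have ha : a = 0 by nra. have hb : b = 0 by nra. by rewrite ha hb.
f_equal; field; exact hn.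
Qed.
Lemma kinv0' : kinv (k0 s) = k0 s.
Proof. case: s => /=; [exact: Rinv_0 | f_equal; unfold Rdiv; ring]. Qed.

Lemma kabs_sub_self (x : K s) : kabs (ksub x x) = 0.
Proof.
case: s x => /= [x|[a b]] /=; rewrite /ksub /=.
  by rewrite Rplus_opp_r Rabs_R0.
by rewrite !Rplus_opp_r Rmult_0_l Rplus_0_l sqrt_0.
Qed.
Lemma kabs_pos (x : K s) : x <> k0 s -> 0 < kabs x.
Proof.
case: s x => /= [x|[a b]] /= H; first by apply: Rabs_pos_lt.
apply: sqrt_lt_R0.
have : ~ (a = 0 /\ b = 0) by move=> [ha hb]; apply: H; rewrite ha hb.
move=> h; nra.
Qed.
Lemma kabs_sub0 (d : K s) : kabs (ksub (k0 s) d) = kabs d.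
Proof.
case: s d => /= [x|[a b]] /=; rewrite /ksub /=.
  by rewrite Rplus_0_l Rabs_Ropp.
f_equal; ring.
Qed.
End KField.

Definition TK (s : scalars) := K s.
Section KInst.
Variable s : scalars.
HB.instance Definition _ := gen_eqMixin (TK s).
HB.instance Definition _ := gen_choiceMixin (TK s).
HB.instance Definition _ := GRing.isZmodule.Build (TK s) (@kaddA' s) (@kaddC' s) (@kadd0' s) (@kaddN' s).
Lemma k10b : (k1 s : TK s) != 0%R.
Proof. by apply/eqP; exact: k10'. Qed.
HB.instance Definition _ := GRing.Zmodule_isComNzRing.Build (TK s) (@kmulA' s) (@kmulC' s) (@kmul1' s) (@kmulDl' s) k10b.
Lemma kinvV'' (x : TK s) : x != 0%R -> ((kinv x : TK s) * x = 1)%R.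
Proof. by move/eqP=> h; apply: kinvV'. Qed.
HB.instance Definition _ := GRing.ComNzRing_isField.Build (TK s) kinvV'' (@kinv0' s).
End KInst.
Check fun s => (TK s : fieldType).

Import GRing.Theory.
Local Open Scope ring_scope.

Definition TA (s : scalars) (A : Alg s) := acar A.
Section AlgInst.
Variables (s : scalars) (A : Alg s).
HB.instance Definition _ := gen_eqMixin (TA A).
HB.instance Definition _ := gen_choiceMixin (TA A).
HB.instance Definition _ := GRing.isZmodule.Build (TA A) (@aaddA _ A) (@aaddC _ A) (@aadd0 _ A) (@aaddN _ A).
Lemma amulA' : associative (amul A : TA A -> TA A -> TA A).
Proof. exact: amulA. Qed.
HB.instance Definition _ := GRing.Zmodule_isPzRing.Build (TA A) amulA' (@amul1l _ A) (@amul1r _ A) (@amulDl _ A) (@amulDr _ A).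
End AlgInst.

Definition TV (s : scalars) (E : VS s) := vcar E.
Section VSInst.
Variables (s : scalars) (E : VS s).
HB.instance Definition _ := gen_eqMixin (TV E).
HB.instance Definition _ := gen_choiceMixin (TV E).
HB.instance Definition _ := GRing.isZmodule.Build (TV E) (@vaddA _ E) (@vaddC _ E) (@vadd0 _ E) (@vaddN _ E).
End VSInst.

Definition TN (s : scalars) (A : Alg s) (N : LMod s A) := @mcar s A N.
Section LModInst.
Variables (s : scalars) (A : Alg s) (N : LMod s A).
HB.instance Definition _ := gen_eqMixin (TN N).
HB.instance Definition _ := gen_choiceMixin (TN N).
HB.instance Definition _ := GRing.isZmodule.Build (TN N) (@maddA s A N) (@maddC s A N) (@madd0 s A N) (@maddN s A N).
Lemma mactA' (a b : TA A) (v : TN N) : mact s A N a (mact s A N b v) = mact s A N (a * b) v.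
Proof. by rewrite mactA. Qed.
Lemma mactDl' (v : TN N) : {morph (mact s A N)^~ v : a b / (a : TA A) + b >-> (a : TN N) + b}.
Proof. by move=> a b; rewrite /= mactDl. Qed.
HB.instance Definition _ := GRing.Zmodule_isLmodule.Build (TA A) (TN N) mactA' (@mact1 s A N) (@mactDr s A N) mactDl'.
End LModInst.

Section LeftAct.
Variables (R : pzRingType) (V : lmodType R).
Definition matV (m n : nat) (P : 'M[R]_(m, n)) (y : 'I_n -> V) : 'I_m -> V :=
  fun i => \sum_j P i j *: y j.
Lemma matV_mul m n k (P : 'M[R]_(m, n)) (Q : 'M[R]_(n, k)) y :
  matV (P *m Q) y = matV P (matV Q y).
Proof.
apply: funext => i; rewrite /matV.
under eq_bigr do rewrite !mxE scaler_suml.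
rewrite exchange_big /=; apply: eq_bigr => j _.
by rewrite scaler_sumr; apply: eq_bigr => l _; rewrite scalerA.
Qed.
Lemma matV_add m n (P : 'M[R]_(m, n)) y z :
  matV P (fun j => y j + z j) = fun i => matV P y i + matV P z i.
Proof. by apply: funext => i; rewrite /matV -big_split /=; apply: eq_bigr => j _; rewrite scalerDr. Qed.
Lemma matV_addl m n (P Q : 'M[R]_(m, n)) y :
  matV (P + Q) y = fun i => matV P y i + matV Q y i.
Proof. by apply: funext => i; rewrite /matV -big_split /=; apply: eq_bigr => j _; rewrite mxE scalerDl. Qed.
Lemma matV0 m n (y : 'I_n -> V) : matV (0 : 'M_(m, n)) y = fun _ => 0.
Proof. by apply: funext => i; rewrite /matV big1 // => j _; rewrite mxE scale0r. Qed.
Lemma matV0r m n (P : 'M[R]_(m, n)) : matV P (fun _ => 0) = fun _ => 0.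
Proof. by apply: funext => i; rewrite /matV big1 // => j _; rewrite scaler0. Qed.
Lemma matVN m n (P : 'M[R]_(m, n)) y : matV P (fun j => - y j) = fun i => - matV P y i.
Proof. by apply: funext => i; rewrite /matV -sumrN; apply: eq_bigr => j _; rewrite scalerN. Qed.
End LeftAct.

Section RightAct.
Variables (R : pzRingType) (V : zmodType) (ract : V -> R -> V).
Hypothesis raD1 : forall x y a, ract (x + y) a = ract x a + ract y a.
Hypothesis raD2 : forall x a b, ract x (a + b) = ract x a + ract x b.
Hypothesis raM : forall x a b, ract x (a * b) = ract (ract x a) b.
Hypothesis ra1 : forall x, ract x 1 = x.
Lemma ra0r x : ract x 0 = 0.
Proof. by apply: (addIr (ract x 0)); rewrite -raD2 !add0r. Qed.
Lemma ra0l a : ract 0 a = 0.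
Proof. by apply: (addIr (ract 0 a)); rewrite -raD1 !add0r. Qed.
Lemma raNl x a : ract (- x) a = - ract x a.
Proof. by apply: (addIr (ract x a)); rewrite -raD1 !addNr ra0l. Qed.
Lemma raNr x a : ract x (- a) = - ract x a.
Proof. by apply: (addIr (ract x a)); rewrite -raD2 !addNr ra0r. Qed.
Lemma ra_suml I r (P : pred I) F a : ract (\sum_(i <- r | P i) F i) a = \sum_(i <- r | P i) ract (F i) a.
Proof. by apply: (big_morph (fun x => ract x a)) => [x y|]; rewrite ?raD1 ?ra0l. Qed.
Lemma ra_sumr I r (P : pred I) F x : ract x (\sum_(i <- r | P i) F i) = \sum_(i <- r | P i) ract x (F i).
Proof. by apply: (big_morph (ract x)) => [a b|]; rewrite ?raD2 ?ra0r. Qed.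

Definition rowV (m n : nat) (x : 'I_m -> V) (P : 'M[R]_(m, n)) : 'I_n -> V :=
  fun j => \sum_i ract (x i) (P i j).
Lemma rowV_mul m n k (x : 'I_m -> V) (P : 'M[R]_(m, n)) (Q : 'M[R]_(n, k)) :
  rowV (rowV x P) Q = rowV x (P *m Q).
Proof.
apply: funext => l; rewrite /rowV.
under eq_bigr do rewrite ra_suml.
rewrite exchange_big /=; apply: eq_bigr => i _.
by rewrite mxE ra_sumr; apply: eq_bigr => j _; rewrite raM.
Qed.
Lemma rowV_add m n (x y : 'I_m -> V) (P : 'M[R]_(m, n)) :
  rowV (fun i => x i + y i) P = fun j => rowV x P j + rowV y P j.
Proof. by apply: funext => j; rewrite /rowV -big_split /=; apply: eq_bigr => i _; rewrite raD1. Qed.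
Lemma rowV_addr m n (x : 'I_m -> V) (P Q : 'M[R]_(m, n)) :
  rowV x (P + Q) = fun j => rowV x P j + rowV x Q j.
Proof. by apply: funext => j; rewrite /rowV -big_split /=; apply: eq_bigr => i _; rewrite mxE raD2. Qed.
Lemma rowV0 m n (x : 'I_m -> V) : rowV x (0 : 'M_(m, n)) = fun _ => 0.
Proof. by apply: funext => j; rewrite /rowV big1 // => i _; rewrite mxE ra0r. Qed.
Lemma rowV0l m n (P : 'M[R]_(m, n)) : rowV (fun _ => 0) P = fun _ => 0.
Proof. by apply: funext => j; rewrite /rowV big1 // => i _; rewrite ra0l. Qed.
Lemma rowVN m n (x : 'I_m -> V) (P : 'M[R]_(m, n)) : rowV (fun i => - x i) P = fun j => - rowV x P j.
Proof. by apply: funext => j; rewrite /rowV -sumrN; apply: eq_bigr => i _; rewrite raNl. Qed.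
End RightAct.

Lemma split_lshift m n (j : 'I_m) : split (lshift n j) = inl j.
Proof. exact: (unsplitK (inl _ j)). Qed.
Lemma split_rshift m n (j : 'I_n) : split (rshift m j) = inr j.
Proof. exact: (unsplitK (inr _ j)). Qed.

Import GRing.Theory.
Local Open Scope ring_scope.

Section Noeth.
Variables (s : scalars) (A : Alg s).
Hypothesis HN : acc_chain (@left_ideal s A).
Local Notation TA := (TA A).

Inductive Span (l : seq TA) : TA -> Prop :=
| sp_gen g : g \in l -> Span l g
| sp0 : Span l 0
| spadd x y : Span l x -> Span l y -> Span l (x + y)
| spmul a x : Span l x -> Span l (a * x).

Lemma Span_ideal l : left_ideal (Span l).
Proof.
split; first exact: sp0.
split; first by move=> x y; exact: spadd.
split; last by move=> x y; exact: spmul.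
move=> x hx; have -> : aopp A x = (-1) * (x : TA) by rewrite mulN1r.
exact: spmul.
Qed.

Lemma Span_mono l l' x : {subset l <= l'} -> Span l x -> Span l' x.
Proof.
move=> sub; elim=> [g /sub|||]; by [constructor | move=> *; constructor].
Qed.

Lemma ideal_fg (I : TA -> Prop) : left_ideal I ->
  exists l : seq TA, (forall g, g \in l -> I g) /\ forall x, I x -> Span l x.
Proof.
move=> [I0 [ID [IN IM]]].
apply: NNPP => hno.
have H : forall l : seq TA, (forall g, g \in l -> I g) -> exists x, I x /\ ~ Span l x.
  move=> l hl; apply: NNPP => h2; apply: hno; exists l; split => // x Ix.
  by apply: NNPP => h3; apply: h2; exists x.
pose f (l : seq TA) := epsilon (inhabits (0 : TA)) (fun x => I x /\ ~ Span l x).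
pose gens := fix gens n := if n is n'.+1 then rcons (gens n') (f (gens n')) else [::].
have gI : forall n g, g \in gens n -> I g.
  elim=> [|n IH] g //=; rewrite mem_rcons inE => /orP[/eqP ->|/IH //].
  by case: (epsilon_spec (inhabits (0:TA)) _ (H _ IH)).
have mono : forall n x, Span (gens n) x -> Span (gens n.+1) x.
  move=> n x; apply: Span_mono => g hg /=; by rewrite mem_rcons inE hg orbT.
have [N HNc] := HN (fun n => Span_ideal (gens n)) mono.
have hx : Span (gens N.+1) (f (gens N)) by apply: sp_gen; rewrite /= mem_rcons mem_head.
have := HNc N.+1 _ (leqnSn N) hx.
by case: (epsilon_spec (inhabits (0:TA)) _ (H _ (gI N))).
Qed.

Lemma Span_sum (l : seq TA) x : Span l x ->
  exists c : 'I_(size l) -> TA, x = \sum_i c i * l`_i.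
Proof.
elim=> [g gl| |x1 y1 _ [c1 ->] _ [c2 ->]| a x1 _ [c ->]].
- have hi : (index g l < size l)%N by rewrite index_mem.
  exists (fun i => if val i == index g l then 1 else 0).
  rewrite (bigD1 (Ordinal hi)) //= eqxx mul1r nth_index //.
  rewrite big1 ?addr0 // => i hne; case: eqP => e; last by rewrite mul0r.
  by case/eqP: hne; apply: val_inj.
- by exists (fun _ => 0); rewrite big1 // => i _; rewrite mul0r.
- by exists (fun i => c1 i + c2 i); rewrite -big_split /=; apply: eq_bigr => i _; rewrite mulrDl.
- by exists (fun i => a * c i); rewrite mulr_sumr; apply: eq_bigr => i _; rewrite mulrA.
Qed.
End Noeth.

Section Submod.
Variables (s : scalars) (A : Alg s).
Hypothesis HN : acc_chain (@left_ideal s A).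
Local Notation TA := (TA A).

Lemma Ucomb n m (U : 'rV[TA]_n -> Prop) (G : 'M[TA]_(m, n)) :
  U 0 -> (forall x y, U x -> U y -> U (x + y)) -> (forall a x, U x -> U (a *: x)) ->
  (forall i, U (row i G)) -> forall c : 'rV_m, U (c *m G).
Proof.
move=> U0 UD UZ UG c; rewrite mulmx_sum_row.
by apply: (big_ind U) => // i _; apply: UZ.
Qed.

Lemma submod_fg n (U : 'rV[TA]_n -> Prop) :
  U 0 -> (forall x y, U x -> U y -> U (x + y)) -> (forall a x, U x -> U (a *: x)) ->
  exists m (G : 'M[TA]_(m, n)), (forall i, U (row i G)) /\
     forall r, U r -> exists c : 'rV_m, r = c *m G.
Proof.
elim: n U => [|n IH] U U0 UD UZ.
  exists 0%N, 0; split; first by case.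
  by move=> r _; exists 0; rewrite [r]thinmx0 [_ *m _]thinmx0.
have UN : forall x, U x -> U (- x).
  by move=> x hx; rewrite -scaleN1r; apply: UZ.
pose U' (r' : 'rV[TA]_n) := U (row_mx (0 : 'M[TA]_1) r').
have [m' [G' [G'U G'sp]]] : exists m (G : 'M[TA]_(m, n)), (forall i, U' (row i G)) /\
     forall r, U' r -> exists c : 'rV_m, r = c *m G.
  apply: IH; rewrite /U'.
  - by rewrite row_mx0.
  - by move=> x y hx hy; rewrite -[0 : 'M_1]addr0 -add_row_mx; apply: UD.
  - by move=> a x hx; rewrite -[0 : 'M_1](scaler0 _ a) -scale_row_mx; apply: UZ.
pose I (a : TA) := exists r' : 'rV[TA]_n, U (row_mx (a%:M : 'M[TA]_1) r').
have Iid : left_ideal I.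
  split; first by exists 0; rewrite (raddf0 (@scalar_mx TA 1)) row_mx0.
  split; first by move=> x y [r1 h1] [r2 h2]; exists (r1 + r2);
    rewrite (raddfD (@scalar_mx TA 1)) -add_row_mx; apply: UD.
  split; first by move=> x [r1 h1]; exists (- r1);
    rewrite (raddfN (@scalar_mx TA 1)) -opp_row_mx; apply: UN.
  by move=> x y [r1 h1]; exists ((x : TA) *: r1); rewrite -scale_scalar_mx -scale_row_mx; apply: UZ.
have [l [lI lsp]] := ideal_fg HN Iid.
pose lift (g : TA) := epsilon (inhabits (0 : 'rV[TA]_n)) (fun r' => U (row_mx (g%:M : 'M[TA]_1) r')).
have liftU : forall g, I g -> U (row_mx (g%:M : 'M[TA]_1) (lift g)).
  by move=> g Ig; apply: (epsilon_spec (inhabits (0 : 'rV[TA]_n)) _ Ig).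
pose G1 : 'M[TA]_(size l, 1 + n) := \matrix_i row_mx ((l`_i)%:M : 'M[TA]_1) (lift l`_i).
pose G2 : 'M[TA]_(m', 1 + n) := row_mx 0 G'.
exists (size l + m')%N, (col_mx G1 G2); split.
  move=> i; case: (split_ordP i) => j ->.
    by rewrite rowKu rowK; apply: liftU; apply: lI; rewrite mem_nth.
  rewrite rowKd; set z := row _ _; have -> : z = row_mx (0 : 'M_1) (row j G') :> 'rV_(1 + n) by apply/rowP => k; rewrite /z /G2 !mxE; case: split => ?; rewrite !mxE.
  exact: G'U.
move=> r Ur.
have [r0 [r1 Er]] : exists r0 (r1 : 'rV[TA]_n), r = row_mx ((r0 : TA)%:M : 'M_1) r1 :> 'rV_(1 + n).
  by exists (lsubmx (r : 'rV_(1 + n)) 0 0), (rsubmx (r : 'rV_(1 + n))); rewrite -mx11_scalar hsubmxK.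
have Ir0 : I r0 by exists r1; rewrite -Er.
have [c Ec] := Span_sum (lsp _ Ir0).
pose c1 : 'rV[TA]_(size l) := \row_i c i.
have G1l : lsubmx G1 = \matrix_(i, j) l`_i.
  by apply/matrixP => i j; rewrite !mxE split_lshift !mxE ord1 eqxx mulr1n.
have lc : lsubmx (c1 *m G1) = (r0%:M : 'M_1).
  rewrite -[G1]hsubmxK mul_mx_row row_mxKl G1l.
  apply/matrixP => i j; rewrite !ord1 !mxE eqxx mulr1n Ec; apply: eq_bigr => k _.
  by rewrite !mxE.
pose v : 'rV_(1 + n) := r - c1 *m G1.
have Uv : U v.
  apply: (UD _ _) => //; apply: (UN _); apply: (Ucomb U0 UD UZ) => i.
  by rewrite /G1 rowK; apply: liftU; apply: lI; rewrite mem_nth.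
have lv : lsubmx v = 0 by rewrite /v linearB /= lc Er row_mxKl subrr.
have U'v : U' (rsubmx v) by rewrite /U' -lv hsubmxK.
have [d Ed] := G'sp _ U'v.
exists (row_mx c1 d); rewrite mul_row_col /G2 (mul_mx_row d (0 : 'M_(m', 1)) G') mulmx0 -Ed -lv hsubmxK /v.
by rewrite addrC subrK.
Qed.

Lemma ker_fg n e (P : 'M[TA]_(n, e)) :
  exists m (S : 'M[TA]_(m.+1, n)), S *m P = 0 /\
     forall r : 'rV_n, r *m P = 0 -> exists c : 'rV_(m.+1), r = c *m S.
Proof.
have h1 : forall x y : 'rV_n, x *m P = 0 -> y *m P = 0 -> (x + y) *m P = 0.
  by move=> x y hx hy; rewrite mulmxDl hx hy addr0.
have h2 : forall (a : TA) (x : 'rV_n), x *m P = 0 -> (a *: x) *m P = 0.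
  by move=> a x hx; rewrite -scalemxAl hx scaler0.
have [m [G [GU Gsp]]] := @submod_fg n (fun r => r *m P = 0) (mul0mx _ _) h1 h2.
exists m, (col_mx (0 : 'M_(1, n)) G); split.
  rewrite (mul_col_mx (0 : 'M_(1,n)) G P) mul0mx; apply/matrixP => i j; rewrite !mxE.
  case: split => k; rewrite ?mxE //.
  by have := GU k; rewrite -row_mul => /rowP /(_ j); rewrite !mxE.
move=> r hr; have [c ->] := Gsp r hr; exists (row_mx (0 : 'M_1) c : 'rV_(1 + m)).
by rewrite (mul_row_col (0 : 'M_(1,1))) mul0mx add0r.
Qed.
End Submod.

Import GRing.Theory.
Local Open Scope ring_scope.

Section Separate.
Variable F : fieldType.
Lemma separate m (W : 'rV[F]_m -> Prop) : W 0 ->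
  (forall a u v, W u -> W v -> W (a *: u + v)) ->
  forall v, ~ W v -> exists c : 'cV[F]_m, (forall w, W w -> w *m c = 0) /\ v *m c != 0.
Proof.
move=> W0 Wl v nWv.
pose P (B : 'M[F]_m) := forall u : 'rV_m, (u <= B)%MS -> W u.
pose Q := fun r => `[< exists B, P B /\ \rank B = r >].
have exQ : exists r, Q r.
  exists 0%N; apply/asboolP; exists 0; split; last by rewrite mxrank0.
  by move=> u; rewrite submx0 => /eqP ->.
have ubQ : forall r, Q r -> (r <= m)%N.
  by move=> r /asboolP [B [_ <-]]; apply: rank_leq_col.
case: (ex_maxnP exQ ubQ) => r /asboolP [B [PB rB]] maxr.
have inB : forall w, W w -> (w <= B)%MS.
  move=> w Ww; apply: contrapT => nwB.
  have PB' : P (B + w)%MS.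
    move=> u /sub_addsmxP [[c1 c2] /= ->].
    have [a ->] : exists a, c2 *m w = a *: w by apply/sub_rVP; apply: submxMl.
    rewrite addrC; apply: Wl => //; apply: PB; exact: submxMl.
  have := maxr (\rank (B + w)%MS); rewrite -rB.
  have lt : (\rank B < \rank (B + w)%MS)%N.
    have := mxrank_leqif_sup (addsmxSl B w); rewrite addsmx_sub submx_refl /=.
    move=> /leqifP; case: ifP => // /negbT; rewrite (negbTE (introN idP nwB)) //.
  move=> h; have := h (introT (asboolP _) (ex_intro _ (B + w)%MS (conj PB' erefl))).
  by rewrite leqNgt lt.
have nvB : ~~ (v <= B)%MS by apply/negP => /PB.
move: nvB; rewrite submxE => nz.
have [j hj] : exists j, (v *m cokermx B) 0 j != 0.
  apply: contrapT => hall; case/negP: nz; apply/eqP/rowP => j.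
  have -> : (v *m cokermx B) 0 j = 0 by apply: contrapT => hj; apply: hall; exists j; apply/eqP.
  by rewrite mxE.
have colm : forall w : 'rV_m, w *m col j (cokermx B) = col j (w *m cokermx B).
  by move=> w; apply/matrixP => i k; rewrite !mxE; apply: eq_bigr => l _; rewrite !mxE.
exists (col j (cokermx B)); split.
  move=> w /inB; rewrite submxE => /eqP h.
  by rewrite colm h col0.
apply/negP => /eqP h; move/negP: hj; apply; apply/eqP.
by have := congr1 (fun M : 'M_1 => M 0 0) h; rewrite colm !mxE.
Qed.
End Separate.

Lemma In_nth' (T : Type) (y0 y : T) (l : seq T) :
  List.In y l -> exists i, (i < size l)%N /\ nth y0 l i = y.
Proof.
elim: l => [//|a l IH] /= [->|/IH [i [hi e]]]; first by exists 0%N.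
by exists i.+1.
Qed.

Section Weak.
Variables (s : scalars) (X Y : Type) (p : X -> Y -> K s).
Local Notation pp x y := (p x y : TK s).

Lemma ann_closed (Q : Y -> Prop) :
  weak_closed p (fun x => forall y, Q y -> pp x y = 0).
Proof.
move=> x /= hx.
have [y [Qy nz]] : exists y, Q y /\ pp x y <> 0.
  apply: contrapT => h; apply: hx => y Qy; apply: contrapT => hne; apply: h; by exists y.
exists [:: y], (kabs (p x y)); split; first exact: kabs_pos.
move=> z hz hall; have := hz y (or_introl erefl).
rewrite (hall y Qy); change (0 : TK s) with (k0 s); rewrite kabs_sub0.
exact: Rlt_irrefl.
Qed.

Variables (x0 : X) (xadd : X -> X -> X) (xscal : TK s -> X -> X).
Variables (y0 : Y) (yadd : Y -> Y -> Y) (yscal : TK s -> Y -> Y).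
Hypothesis px0 : forall y, pp x0 y = 0.
Hypothesis pxD : forall u v y, pp (xadd u v) y = pp u y + pp v y.
Hypothesis pxZ : forall a u y, pp (xscal a u) y = a * pp u y.
Hypothesis py0 : forall x, pp x y0 = 0.
Hypothesis pyD : forall x y1 y2, pp x (yadd y1 y2) = pp x y1 + pp x y2.
Hypothesis pyZ : forall a x y, pp x (yscal a y) = a * pp x y.

Lemma bipolar (V : X -> Prop) : V x0 ->
  (forall a u v, V u -> V v -> V (xadd (xscal a u) v)) ->
  weak_closed p V -> forall x, ~ V x ->
  exists y, (forall v, V v -> pp v y = 0) /\ pp x y <> 0.
Proof.
move=> V0 Vl Vc x nVx.
have [ys [eps [eps0 Hn]]] := Vc x nVx.
pose m := size ys.
pose phi (z : X) : 'rV[TK s]_m := \row_i pp z (nth y0 ys i).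
pose W (w : 'rV[TK s]_m) := exists v, V v /\ phi v = w.
have W0 : W 0 by exists x0; split => //; apply/rowP => i; rewrite !mxE px0.
have Wl : forall a u v, W u -> W v -> W (a *: u + v).
  move=> a u v [u' [Vu' <-]] [v' [Vv' <-]]; exists (xadd (xscal a u') v'); split; first exact: Vl.
  by apply/rowP => i; rewrite !mxE pxD pxZ.
have nW : ~ W (phi x).
  move=> [v [Vv e]]; apply: (Hn v) => // y yin.
  have [i [hi <-]] := In_nth' y0 yin.
  have := congr1 (fun r : 'rV_m => r 0 (Ordinal hi)) e; rewrite !mxE /=.
  by move=> ->; rewrite kabs_sub_self.
have [c [cW cx]] := separate W0 Wl nW.
pose y := \big[yadd/y0]_(i < m) yscal (c i 0) (nth y0 ys i).
have py : forall z, pp z y = (phi z *m c) 0 0.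
  move=> z; rewrite /y (big_morph (fun y => pp z y) (pyD z) (py0 z)) !mxE.
  by apply: eq_bigr => i _; rewrite pyZ !mxE mulrC.
exists y; split.
  by move=> v Vv; rewrite py (cW (phi v)) ?mxE //; exists v.
rewrite py => h; case/negP: cx; apply/eqP/matrixP => i j.
by rewrite !ord1 h mxE.
Qed.
End Weak.

Import GRing.Theory.
Local Open Scope ring_scope.

Section Quot.
Variables (T : zmodType) (V : T -> Prop).
Hypothesis V0 : V 0.
Hypothesis VB : forall x y, V x -> V y -> V (x - y).
Lemma VN x : V x -> V (- x). Proof. by move=> h; rewrite -sub0r; apply: VB. Qed.
Lemma VD x y : V x -> V y -> V (x + y).
Proof. by move=> hx hy; rewrite -[y]opprK; apply: VB => //; apply: VN. Qed.

Definition Qcar := {C : T -> Prop | exists x, C = fun y => V (y - x)}.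
Definition cls (x : T) : Qcar := exist _ (fun y => V (y - x)) (ex_intro _ x erefl).
Definition rep (g : Qcar) : T := proj1_sig (cid (proj2_sig g)).
Lemma cls_rep g : cls (rep g) = g.
Proof.
rewrite /rep; case: cid => x /= e.
move: g e => [C h] /= e; rewrite /cls; move: h; rewrite e => h.
by congr exist.
Qed.
Lemma clsP x y : cls x = cls y <-> V (x - y).
Proof.
split.
  move=> e; have := congr1 (fun g : Qcar => proj1_sig g x) e => /=.
  by rewrite subrr => <-.
move=> h; rewrite /cls; have E : (fun z => V (z - x)) = (fun z => V (z - y)).
  apply: funext => z; apply: propext; split => hz.
    by have := VD hz h; rewrite addrA subrK.
  by have := VB hz h; rewrite opprB addrA subrK.
move: (ex_intro _ x _) (ex_intro _ y _); rewrite E => h1 h2; by congr exist.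
Qed.
Lemma cls_repV x : V (rep (cls x) - x).
Proof. by apply/clsP; rewrite cls_rep. Qed.

Definition qadd g h := cls (rep g + rep h).
Definition qopp g := cls (- rep g).
Definition q0 := cls 0.
Lemma cls_add x y : cls (x + y) = qadd (cls x) (cls y).
Proof.
rewrite /qadd; apply/clsP; have := VN (VD (cls_repV x) (cls_repV y)).
by rewrite opprD !opprB addrACA -opprD.
Qed.
Lemma qP g : exists x, g = cls x. Proof. by exists (rep g); rewrite cls_rep. Qed.
Lemma qaddA : forall x y z, qadd x (qadd y z) = qadd (qadd x y) z.
Proof.
move=> g h k; case: (qP g) => a ->; case: (qP h) => b ->; case: (qP k) => c ->.
by rewrite -!cls_add addrA.
Qed.
Lemma qaddC : forall x y, qadd x y = qadd y x.
Proof. by move=> g h; case: (qP g) => a ->; case: (qP h) => b ->; rewrite -!cls_add addrC. Qed.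
Lemma qadd0 : forall x, qadd q0 x = x.
Proof. by move=> g; case: (qP g) => a ->; rewrite /q0 -cls_add add0r. Qed.
Lemma cls_opp x : cls (- x) = qopp (cls x).
Proof. by rewrite /qopp; apply/clsP; rewrite opprK addrC; exact: cls_repV. Qed.
Lemma qaddN : forall x, qadd (qopp x) x = q0.
Proof. by move=> g; case: (qP g) => a ->; rewrite -cls_opp -cls_add addNr. Qed.
Definition QG : AbGroup := @Build_AbGroup Qcar q0 qadd qopp qaddA qaddC qadd0 qaddN.
Lemma cls_sum I (t : seq I) (f : I -> T) :
  gsum (map (fun i => (cls (f i) : gcar QG)) t) = cls (\sum_(i <- t) f i).
Proof.
elim: t => [|a t IH] /=; first by rewrite big_nil.
by rewrite IH big_cons -cls_add.
Qed.
Lemma cls0 x : (cls x : gcar QG) = g0 QG -> V x.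
Proof. by move/clsP; rewrite subr0. Qed.
End Quot.

Import GRing.Theory.
Local Open Scope ring_scope.

Lemma sig_eq (T : Type) (P : T -> Prop) (u v : {x | P x}) : sval u = sval v -> u = v.
Proof. by case: u v => [x hx] [y hy] /= e; move: hx hy; rewrite e => hx hy; congr exist. Qed.

Section RowMods.
Variables (s : scalars) (A : Alg s).
Local Notation TA := (TA A).
Variable e : nat.
Lemma rmA (a b : TA) (x : 'rV[TA]_e) : (a * b) *: x = a *: (b *: x).
Proof. by rewrite scalerA. Qed.
Lemma rmDl (a b : TA) (x : 'rV[TA]_e) : (a + b) *: x = a *: x + b *: x.
Proof. by rewrite scalerDl. Qed.
Lemma rmDr (a : TA) (x y : 'rV[TA]_e) : a *: (x + y) = a *: x + a *: y.
Proof. by rewrite scalerDr. Qed.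
Definition RowLMod : LMod s A :=
  @Build_LMod s A 'rV[TA]_e 0 +%R -%R (fun a v => (a : TA) *: v) (@addrA _) (@addrC _) (@add0r _) (@addNr _)
    rmA (@scale1r _ _) rmDl rmDr.

Variables (n : nat) (P : 'M[TA]_(n, e)).
Definition Img := {v : 'rV[TA]_e | exists r : 'rV_n, v = r *m P}.
Definition img0 : Img := exist _ 0 (ex_intro _ 0 (esym (mul0mx _ _))).
Lemma imgD_proof (u v : Img) : exists r : 'rV_n, sval u + sval v = r *m P.
Proof. by case: u v => [u [r hr]] [v [r' hr']] /=; exists (r + r'); rewrite hr hr' mulmxDl. Qed.
Definition imgD (u v : Img) : Img := exist _ _ (imgD_proof u v).
Lemma imgN_proof (u : Img) : exists r : 'rV_n, - sval u = r *m P.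
Proof. by case: u => [u [r hr]] /=; exists (- r); rewrite hr mulNmx. Qed.
Definition imgN (u : Img) : Img := exist _ _ (imgN_proof u).
Lemma imgZ_proof (a : TA) (u : Img) : exists r : 'rV_n, a *: sval u = r *m P.
Proof. by case: u => [u [r hr]] /=; exists (a *: r); rewrite hr scalemxAl. Qed.
Definition imgZ (a : TA) (u : Img) : Img := exist _ _ (imgZ_proof a u).
Lemma img_addA (x y z : Img) : imgD x (imgD y z) = imgD (imgD x y) z.
Proof. by apply: sig_eq; rewrite /= addrA. Qed.
Lemma img_addC (x y : Img) : imgD x y = imgD y x.
Proof. by apply: sig_eq; rewrite /= addrC. Qed.
Lemma img_add0 (x : Img) : imgD img0 x = x.
Proof. by apply: sig_eq; rewrite /= add0r. Qed.
Lemma img_addN (x : Img) : imgD (imgN x) x = img0.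
Proof. by apply: sig_eq; rewrite /= addNr. Qed.
Lemma img_ZA (a b : TA) (x : Img) : imgZ (a * b) x = imgZ a (imgZ b x).
Proof. by apply: sig_eq; rewrite /= scalerA. Qed.
Lemma img_Z1 (x : Img) : imgZ 1 x = x.
Proof. by apply: sig_eq; rewrite /= scale1r. Qed.
Lemma img_ZDl (a b : TA) (x : Img) : imgZ (a + b) x = imgD (imgZ a x) (imgZ b x).
Proof. by apply: sig_eq; rewrite /= scalerDl. Qed.
Lemma img_ZDr (a : TA) (x y : Img) : imgZ a (imgD x y) = imgD (imgZ a x) (imgZ a y).
Proof. by apply: sig_eq; rewrite /= scalerDr. Qed.
Definition ImgLMod : LMod s A :=
  @Build_LMod s A Img img0 imgD imgN imgZ img_addA img_addC img_add0 img_addN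
    img_ZA img_Z1 img_ZDl img_ZDr.
Definition incl (u : ImgLMod) : RowLMod := sval u.
Lemma incl_lin : lmod_lin incl.
Proof. by split. Qed.
Lemma incl_inj : forall x y : ImgLMod, incl x = incl y -> x = y.
Proof. by move=> x y; apply: sig_eq. Qed.
End RowMods.

Definition TG (G : AbGroup) := gcar G.
Section TGInst.
Variable G : AbGroup.
HB.instance Definition _ := gen_eqMixin (TG G).
HB.instance Definition _ := gen_choiceMixin (TG G).
HB.instance Definition _ := GRing.isZmodule.Build (TG G) (@gaddA G) (@gaddC G) (@gadd0 G) (@gaddN G).
Lemma gsum_big (I : Type) (t : seq I) (f : I -> G) :
  gsum (map f t) = \sum_(a <- t) (f a : TG G).
Proof. by elim: t => [|a t IH] /=; rewrite ?big_nil ?big_cons ?IH. Qed.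
End TGInst.

Section Main.
Variables (s : scalars) (A : Alg s) (E E' : VS s) (p : E -> E' -> K s).
Hypothesis Hbil : bilinear p.
Hypothesis Hnd : nondegenerate p.
Variable act : A -> E' -> E'.
Hypothesis Hact : lmod_action act.
Variable eact : E -> A -> E.
Hypothesis Hadj : forall (x : E) (a : A) (y : E'), p (eact x a) y = p x (act a y).

Local Notation TA := (TA A).
Local Notation TE := (TV E).
Definition TE' := TV E'.
HB.instance Definition _ := GRing.Zmodule.on TE'.
Local Notation ea x a := (eact (x : TE) (a : TA) : TE).
Local Notation pp x y := (p (x : TE) (y : TE') : TK s).

Lemma actDl' (y : TE') : {morph act^~ y : a b / (a : TA) + b >-> (a : TE') + b}.
Proof. by move=> a b; case: Hact => _ [_ [h _]]; apply: h. Qed.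
Lemma actA' (a b : TA) (y : TE') : act a (act b y) = act (a * b) y.
Proof. by case: Hact => h _; rewrite h. Qed.
Lemma act1' (y : TE') : act (1 : TA) y = y.
Proof. by case: Hact => _ [h _]; apply: h. Qed.
Lemma actDr' (a : TA) : {morph act a : x y / (x : TE') + y}.
Proof. by move=> x y; case: Hact => _ [_ [_ [h _]]]; apply: h. Qed.
HB.instance Definition _ := GRing.Zmodule_isLmodule.Build TA TE' actA' act1' (fun a => @actDr' a) actDl'.

Lemma ppDl (x y : TE) (z : TE') : pp (x + y) z = pp x z + pp y z.
Proof. by case: Hbil => h _; apply: h. Qed.
Lemma ppZl (c : TK s) (x : TE) (z : TE') : pp (vscal E c x) z = c * pp x z.
Proof. by case: Hbil => _ [h _]; apply: h. Qed.
Lemma ppDr (x : TE) (y z : TE') : pp x (y + z) = pp x y + pp x z.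
Proof. by case: Hbil => _ [_ [h _]]; apply: h. Qed.
Lemma ppZr (c : TK s) (x : TE) (z : TE') : pp x (vscal E' c z) = c * pp x z.
Proof. by case: Hbil => _ [_ [_ h]]; apply: h. Qed.
Lemma pp0l (z : TE') : pp 0 z = 0.
Proof. by apply: (addIr (pp 0 z)); rewrite -ppDl !add0r. Qed.
Lemma pp0r (x : TE) : pp x 0 = 0.
Proof. by apply: (addIr (pp x 0)); rewrite -ppDr !add0r. Qed.
Lemma ppNl (x : TE) (z : TE') : pp (- x) z = - pp x z.
Proof. by apply: (addIr (pp x z)); rewrite -ppDl !addNr pp0l. Qed.
Lemma ppNr (x : TE) (z : TE') : pp x (- z) = - pp x z.
Proof. by apply: (addIr (pp x z)); rewrite -ppDr !addNr pp0r. Qed.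
Lemma pp_suml I r (P : pred I) (F : I -> TE) z : pp (\sum_(i <- r | P i) F i) z = \sum_(i <- r | P i) pp (F i) z.
Proof. by apply: (big_morph (fun x => pp x z)) => [x y|]; rewrite ?ppDl ?pp0l. Qed.
Lemma pp_sumr I r (P : pred I) (F : I -> TE') x : pp x (\sum_(i <- r | P i) F i) = \sum_(i <- r | P i) pp x (F i).
Proof. by apply: (big_morph (fun z => pp x z)) => [y z|]; rewrite ?ppDr ?pp0r. Qed.
Lemma ndl (x x' : TE) : (forall y, pp x y = pp x' y) -> x = x'.
Proof.
move=> h; apply/eqP; rewrite -subr_eq0; apply/eqP; case: Hnd => nd _; apply: nd => y.
by have := h y; rewrite -/(pp _ _) ppDl ppNl => ->; rewrite subrr.
Qed.
Lemma ndr (y y' : TE') : (forall x, pp x y = pp x y') -> y = y'.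
Proof.
move=> h; apply/eqP; rewrite -subr_eq0; apply/eqP; case: Hnd => _ nd; apply: nd => x.
by have := h x; rewrite -/(pp _ _) ppDr ppNr => ->; rewrite subrr.
Qed.

Lemma actZ' (c : TK s) (a : TA) (y : TE') : act (ascal A c a) y = vscal E' c (act a y).
Proof. by case: Hact => _ [_ [_ [_ h]]]; apply: h. Qed.
Lemma act_scal (c : TK s) (a : TA) (y : TE') : act a (vscal E' c y) = vscal E' c (act a y).
Proof.
have -> : vscal E' c y = act (ascal A c (1 : TA)) y by rewrite actZ' act1'.
by rewrite actA' -actZ'; congr act; have := @ascal_mulr _ A c a (1 : TA); rewrite (@amul1r _ A).
Qed.

Lemma eaD1 (x y : TE) (a : TA) : ea (x + y) a = ea x a + ea y a.
Proof. by apply: ndl => z; rewrite ppDl !Hadj ppDl. Qed.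
Lemma eaD2 (x : TE) (a b : TA) : ea x (a + b) = ea x a + ea x b.
Proof. by apply: ndl => z; rewrite ppDl !Hadj -ppDr -actDl'. Qed.
Lemma eaM (x : TE) (a b : TA) : ea x (a * b) = ea (ea x a) b.
Proof. by apply: ndl => z; rewrite !Hadj -actA'. Qed.
Lemma ea1 (x : TE) : ea x 1 = x.
Proof. by apply: ndl => z; rewrite Hadj act1'. Qed.
Lemma ea_scal (c : TK s) (x : TE) (a : TA) : ea (vscal E c x) a = vscal E c (ea x a).
Proof. by apply: ndl => z; rewrite Hadj !ppZl Hadj. Qed.

Definition rowX m n (x : 'I_m -> TE) (P : 'M[TA]_(m, n)) : 'I_n -> TE :=
  rowV (fun x a => ea x a) x P.
Definition colY m n (P : 'M[TA]_(m, n)) (y : 'I_n -> TE') : 'I_m -> TE' := matV P y.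
Definition mxA m n (P : 'I_m -> 'I_n -> A) : 'M[TA]_(m, n) := \matrix_(i, j) (P i j : TA).

Lemma rowmulE_eq m n (x : 'I_m -> E) (P : 'I_m -> 'I_n -> A) :
  rowmulE eact x P = rowX x (mxA P).
Proof. by apply: funext => j; rewrite /rowX /rowV; apply: eq_bigr => i _; rewrite mxE. Qed.
Lemma matmulE_eq m n (P : 'I_m -> 'I_n -> A) (y : 'I_n -> E') :
  matmulE' act P y = colY (mxA P) y.
Proof. by apply: funext => j; rewrite /colY /matV; apply: eq_bigr => i _; rewrite mxE. Qed.
Lemma mxA_id m n (P : 'M[TA]_(m, n)) : mxA (fun i j => P i j) = P.
Proof. by apply/matrixP => i j; rewrite mxE. Qed.

Lemma rowE_mul m n k (x : 'I_m -> TE) (P : 'M[TA]_(m, n)) (Q : 'M[TA]_(n, k)) :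
  rowX (rowX x P) Q = rowX x (P *m Q).
Proof. exact: (rowV_mul eaD1 eaD2 eaM). Qed.
Lemma rowE_add m n (x y : 'I_m -> TE) (P : 'M[TA]_(m, n)) :
  rowX (fun i => x i + y i) P = fun j => rowX x P j + rowX y P j.
Proof. exact: (rowV_add eaD1). Qed.
Lemma rowE0 m n (P : 'M[TA]_(m, n)) : rowX (fun _ => 0) P = fun _ => 0.
Proof. exact: (rowV0l eaD1). Qed.
Lemma rowE0r m n (x : 'I_m -> TE) : rowX x (0 : 'M_(m, n)) = fun _ => 0.
Proof. exact: (rowV0 eaD2). Qed.
Lemma rowEN m n (x : 'I_m -> TE) (P : 'M[TA]_(m, n)) :
  rowX (fun i => - x i) P = fun j => - rowX x P j.
Proof. exact: (rowVN eaD1). Qed.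
Lemma rowE_addr m n (x : 'I_m -> TE) (P Q : 'M[TA]_(m, n)) :
  rowX x (P + Q) = fun j => rowX x P j + rowX x Q j.
Proof. exact: (rowV_addr eaD2). Qed.
Lemma rowE_scal m n (c : TK s) (x : 'I_m -> TE) (P : 'M[TA]_(m, n)) :
  rowX (fun i => vscal E c (x i)) P = fun j => vscal E c (rowX x P j).
Proof.
apply: funext => j; rewrite /rowX /rowV.
under eq_bigr do rewrite ea_scal.
apply/esym; apply: (big_morph (vscal E c)) => [u v|]; first exact: vscalDr.
by apply: ndl => z; rewrite ppZl pp0l mulr0.
Qed.

Lemma pairnE n (x : 'I_n -> E) (y : 'I_n -> E') : (pairn p x y : TK s) = \sum_i pp (x i) (y i).
Proof. by []. Qed.

Lemma transp m n (x : 'I_m -> TE) (P : 'M[TA]_(m, n)) (y : 'I_n -> TE') :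
  (pairn p (rowX x P) y : TK s) = pairn p x (colY P y).
Proof.
rewrite !pairnE /rowX /rowV /colY /matV.
under eq_bigr do rewrite pp_suml.
rewrite exchange_big /=; apply: eq_bigr => i _.
by rewrite pp_sumr; apply: eq_bigr => j _; rewrite Hadj.
Qed.

Lemma pairn0l n (y : 'I_n -> E') : (pairn p (fun _ => 0 : TE) y : TK s) = 0.
Proof. by rewrite pairnE big1 // => i _; rewrite pp0l. Qed.
Lemma pairn0r n (x : 'I_n -> E) : (pairn p x (fun _ => 0 : TE') : TK s) = 0.
Proof. by rewrite pairnE big1 // => i _; rewrite pp0r. Qed.

Lemma pairn_ndl n (z : 'I_n -> TE) : (forall w, (pairn p z w : TK s) = 0) -> z = fun _ => 0.
Proof.
move=> h; apply: funext => i; apply: ndl => y; rewrite pp0l.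
have := h (fun j => if j == i then y else 0); rewrite pairnE (bigD1 i) //= eqxx.
by rewrite big1 ?addr0 // => j /negbTE ->; rewrite pp0r.
Qed.
Lemma pairn_ndr n (z : 'I_n -> TE') : (forall w, (pairn p w z : TK s) = 0) -> z = fun _ => 0.
Proof.
move=> h; apply: funext => i; apply: ndr => y; rewrite pp0r.
have := h (fun j => if j == i then y else 0); rewrite pairnE (bigD1 i) //= eqxx.
by rewrite big1 ?addr0 // => j /negbTE ->; rewrite pp0l.
Qed.

Lemma ker_rowE_closed n r (P : 'M[TA]_(n, r)) :
  weak_closed (@pairn s E E' p n) (fun x : 'I_n -> E => rowX x P = fun _ => 0).
Proof.
have -> : (fun x : 'I_n -> E => rowX x P = fun _ => 0) =
  (fun x => forall y, (exists w, y = colY P w) -> (pairn p x y : TK s) = 0).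
  apply: funext => x; apply: propext; split.
    by move=> h y [w ->]; rewrite -transp h pairn0l.
  by move=> h; apply: pairn_ndl => w; rewrite transp; apply: h; exists w.
exact: ann_closed.
Qed.
Lemma ker_colE_closed m n (S : 'M[TA]_(m, n)) :
  weak_closed (fun (y : 'I_n -> E') (x : 'I_n -> E) => pairn p x y)
    (fun y : 'I_n -> E' => colY S y = fun _ => 0).
Proof.
have -> : (fun y : 'I_n -> E' => colY S y = fun _ => 0) =
  (fun y => forall x, (exists w, x = rowX w S) -> (pairn p x y : TK s) = 0).
  apply: funext => y; apply: propext; split.
    by move=> h x [w ->]; rewrite transp h pairn0r.
  by move=> h; apply: pairn_ndr => w; rewrite -transp; apply: h; exists w.
exact: (@ann_closed s _ _ (fun (y : 'I_n -> E') (x : 'I_n -> E) => pairn p x y) (fun x => exists w, x = rowX w S)).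
Qed.

Definition dot n (r : 'rV[TA]_n) (y : 'I_n -> TE') : TE' := \sum_l r 0 l *: y l.
Lemma dot_mul m n (c : 'rV[TA]_m) (S : 'M[TA]_(m, n)) y : dot (c *m S) y = dot c (colY S y).
Proof.
rewrite /dot /colY /matV; under eq_bigr do rewrite mxE scaler_suml.
rewrite exchange_big /=; apply: eq_bigr => k _.
by rewrite scaler_sumr; apply: eq_bigr => l _; rewrite scalerA.
Qed.
Lemma dotD n (r r' : 'rV[TA]_n) y : dot (r + r') y = dot r y + dot r' y.
Proof. by rewrite /dot -big_split; apply: eq_bigr => l _; rewrite mxE scalerDl. Qed.
Lemma dotN n (r : 'rV[TA]_n) y : dot (- r) y = - dot r y.
Proof. by rewrite /dot -sumrN; apply: eq_bigr => l _; rewrite mxE scaleNr. Qed.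
Lemma dotZ n (a : TA) (r : 'rV[TA]_n) y : dot (a *: r) y = a *: dot r y.
Proof. by rewrite /dot scaler_sumr; apply: eq_bigr => l _; rewrite mxE scalerA. Qed.
Lemma dot_delta n (l : 'I_n) y : dot (delta_mx 0 l) y = y l.
Proof.
rewrite /dot (bigD1 l) //= mxE !eqxx scale1r big1 ?addr0 // => k /negbTE hk.
by rewrite mxE hk andbF scale0r.
Qed.
Lemma dot0y n (y : 'I_n -> TE') : dot 0 y = 0.
Proof. by rewrite /dot big1 // => l _; rewrite mxE scale0r. Qed.
Lemma dot_y0 n (r : 'rV[TA]_n) : dot r (fun _ => 0) = 0.
Proof. by rewrite /dot big1 // => l _; rewrite scaler0. Qed.

Lemma inj_exact (Hinj : injective_lmod (vadd E') act) n e m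
  (P : 'M[TA]_(n, e)) (S : 'M[TA]_(m, n)) :
  (forall r : 'rV_n, r *m P = 0 -> exists c : 'rV_m, r = c *m S) ->
  forall y : 'I_n -> TE', colY S y = (fun _ => 0) -> exists z : 'I_e -> TE', y = colY P z.
Proof.
move=> hex y hy.
have wd : forall r r' : 'rV_n, r *m P = r' *m P -> dot r y = dot r' y.
  move=> r r' h.
  have [c hc] : exists c, r - r' = c *m S by apply: hex; rewrite mulmxBl h subrr.
  apply/eqP; rewrite -subr_eq0 -dotN -dotD hc dot_mul hy dot_y0 //.
pose M := ImgLMod P; pose N := RowLMod A e.
pose f (u : M) : E' := dot (sval (cid (proj2_sig u))) y.
have fE : forall (u : M) r, sval u = r *m P -> f u = dot r y.
  by move=> u r h; rewrite /f; case: cid => r' h' /=; apply: wd; rewrite -h -h'.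
have flin : lin_into (vadd E') act f.
  split.
    move=> u v; case: (proj2_sig u) => r hr; case: (proj2_sig v) => r' hr'.
    rewrite (fE _ (r + r')); last by rewrite /= hr hr' mulmxDl.
    by rewrite (fE _ r hr) (fE _ r' hr') dotD.
  move=> a u; case: (proj2_sig u) => r hr.
  rewrite (fE _ ((a : TA) *: r)); last by rewrite /= hr scalemxAl.
  by rewrite (fE _ r hr) dotZ.
have [g [[gD gZ] gf]] := Hinj M N (@incl s A e n P) f (incl_lin P) (@incl_inj s A e n P) flin.
have g0 : (g (0 : 'rV[TA]_e) : TE') = 0.
  have h := gD (0 : 'rV[TA]_e) 0.
  have e0 : madd s A N (0 : 'rV[TA]_e) 0 = 0 by rewrite /= addr0.
  rewrite e0 in h; apply: (@addIr TE' (g 0)); rewrite add0r; exact: (esym h).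
have gsum : forall (I : Type) (t : seq I) (F : I -> 'rV[TA]_e),
    (g (\sum_(i <- t) F i) : TE') = \sum_(i <- t) (g (F i) : TE').
  by move=> I t F; apply: (big_morph g) => // u v; apply: gD.
exists (fun j => g (delta_mx 0 j)).
apply: funext => l.
have hin : exists r : 'rV_n, row l P = r *m P by exists (delta_mx 0 l); rewrite -rowE.
have grow : g (row l P) = y l.
  have := gf (exist _ (row l P) hin); rewrite /incl /= => ->.
  by rewrite (fE _ (delta_mx 0 l)) ?dot_delta //= -rowE.
rewrite -grow /colY /matV.
have -> : row l P = \sum_j P l j *: (delta_mx 0 j : 'rV[TA]_e).
  apply/rowP => k; rewrite summxE (bigD1 k) //= !mxE !eqxx mulr1 big1 ?addr0 // => j /negbTE hj.
  by rewrite !mxE eq_sym hj mulr0.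
by rewrite gsum; apply: eq_bigr => j _; apply: gZ.
Qed.

Hypothesis HK : Kothe p act eact.
Hypothesis HN : acc_chain (@left_ideal s A).

Lemma pairnDl n (x u : 'I_n -> E) (y : 'I_n -> E') :
  (pairn p (fun i => vadd E (x i) (u i)) y : TK s) = (pairn p x y : TK s) + pairn p u y.
Proof. by rewrite !pairnE -big_split; apply: eq_bigr => i _; rewrite ppDl. Qed.
Lemma pairnZl n c (x : 'I_n -> E) (y : 'I_n -> E') :
  (pairn p (fun i => vscal E c (x i)) y : TK s) = (c : TK s) * pairn p x y.
Proof. by rewrite !pairnE mulr_sumr; apply: eq_bigr => i _; rewrite ppZl. Qed.
Lemma pairnDr n (x : 'I_n -> E) (y u : 'I_n -> E') :
  (pairn p x (fun i => vadd E' (y i) (u i)) : TK s) = (pairn p x y : TK s) + pairn p x u.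
Proof. by rewrite !pairnE -big_split; apply: eq_bigr => i _; rewrite ppDr. Qed.
Lemma pairnZr n c (x : 'I_n -> E) (y : 'I_n -> E') :
  (pairn p x (fun i => vscal E' c (y i)) : TK s) = (c : TK s) * pairn p x y.
Proof. by rewrite !pairnE mulr_sumr; apply: eq_bigr => i _; rewrite ppZr. Qed.

Lemma star (Hinj : injective_lmod (vadd E') act) n e (P : 'M[TA]_(n, e)) (x : 'I_n -> TE) :
  rowX x P = (fun _ => 0) ->
  exists m (S : 'M[TA]_(m, n)) (z : 'I_m -> TE), S *m P = 0 /\ x = rowX z S.
Proof.
case: n P x => [|n] P x hx.
  exists 0%N, 0, (fun _ => 0); split; first by rewrite [LHS]flatmx0.
  by apply: funext => -[].
have [m [S [SP Sex]]] := ker_fg HN P.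
have [m2 [T [TS Tex]]] := ker_fg HN S.
have inj1 := inj_exact Hinj (fun r h => Sex r h).
have inj2 := inj_exact Hinj (fun r h => Tex r h).
have clS : weak_closed (fun (y : 'I_m.+1 -> E') (x : 'I_m.+1 -> E) => pairn p x y)
    (fun y => exists w, forall i, y i = matmulE' act (fun i j => S i j) w i).
  have -> : (fun y : 'I_m.+1 -> E' => exists w, forall i, y i = matmulE' act (fun i j => S i j) w i)
     = (fun y => colY T y = fun _ => 0).
    apply: funext => y; apply: propext; split.
      move=> [w hw]; have -> : y = colY S w.
        by apply: funext => i; rewrite hw matmulE_eq mxA_id.
      by rewrite /colY -matV_mul TS matV0.
    move=> h; have [w hw] := inj2 y h; exists w => i.
    by rewrite hw matmulE_eq mxA_id.
  exact: ker_colE_closed.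
have clX := (proj2 (HK (ltn0Sn m) (ltn0Sn n) (fun i j => S i j))) clS.
have [w hw] : exists w, forall j, x j = rowmulE eact w (fun i j => S i j) j.
  apply: contrapT => nV.
  have V0 : (exists w, forall j, (fun _ => v0 E) j = rowmulE eact w (fun i j => S i j) j).
    by exists (fun _ => 0 : TE) => j; rewrite rowmulE_eq rowE0.
  have Vl : forall a (u v : 'I_n.+1 -> E),
      (exists w, forall j, u j = rowmulE eact w (fun i j => S i j) j) ->
      (exists w, forall j, v j = rowmulE eact w (fun i j => S i j) j) ->
      (exists w, forall j, vadd E (vscal E a (u j)) (v j) = rowmulE eact w (fun i j => S i j) j).
    move=> a u v [wu hu] [wv hv]; exists (fun i => vadd E (vscal E a (wu i)) (wv i)) => j.
    by rewrite rowmulE_eq rowE_add rowE_scal -!rowmulE_eq hu hv.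
  have [y [yV yx]] := @bipolar s _ _ (@pairn s E E' p n.+1)
    (fun _ => v0 E) (fun x u i => vadd E (x i) (u i)) (fun c x i => vscal E c (x i))
    (fun _ => v0 E') (fun y u i => vadd E' (y i) (u i)) (fun c y i => vscal E' c (y i))
    (fun y => pairn0l y) (fun x u y => pairnDl x u y) (fun c x y => pairnZl c x y)
    (fun x => pairn0r x) (fun x y u => pairnDr x y u) (fun c x y => pairnZr c x y)
    _ V0 Vl clX x nV.
  have hSy : colY S y = fun _ => 0.
    apply: pairn_ndr => w; rewrite -transp; apply: yV.
    by exists w => j; rewrite rowmulE_eq mxA_id.
  have [z hz] := inj1 y hSy.
  by apply: yx; rewrite hz -transp hx pairn0l.
exists m.+1, S, w; split => //.
by apply: funext => j; rewrite hw rowmulE_eq mxA_id.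
Qed.

Section Tensor.
Variable N : LMod s A.
Local Notation TNN := (TN N).
Definition FN := TNN -> TE.
Definition fn0 : FN := fun _ => 0.
Definition fnadd (f g : FN) : FN := fun u => f u + g u.
Definition fnopp (f : FN) : FN := fun u => - f u.
Lemma fnaddA : associative fnadd.
Proof. by move=> f g h; apply: funext => u; rewrite /fnadd addrA. Qed.
Lemma fnaddC : commutative fnadd.
Proof. by move=> f g; apply: funext => u; rewrite /fnadd addrC. Qed.
Lemma fnadd0 : left_id fn0 fnadd.
Proof. by move=> f; apply: funext => u; rewrite /fnadd /fn0 add0r. Qed.
Lemma fnaddN : left_inverse fn0 fnopp fnadd.
Proof. by move=> f; apply: funext => u; rewrite /fnadd /fnopp /fn0 addNr. Qed.
HB.instance Definition _ := gen_eqMixin FN.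
HB.instance Definition _ := gen_choiceMixin FN.
HB.instance Definition _ := GRing.isZmodule.Build FN fnaddA fnaddC fnadd0 fnaddN.

Lemma fnE_add (f g : FN) u : (f + g) u = f u + g u. Proof. by []. Qed.
Lemma fnE_opp (f : FN) u : (- f) u = - f u. Proof. by []. Qed.
Lemma fnE_0 u : (0 : FN) u = 0. Proof. by []. Qed.
Lemma fnE_sum I (r : seq I) (P : pred I) (F : I -> FN) u :
  (\sum_(i <- r | P i) F i) u = \sum_(i <- r | P i) F i u.
Proof. by apply: (big_morph (fun f : FN => f u)). Qed.

Definition delta (n : TNN) (x : TE) : FN := fun u => if pselect (n = u) then x else 0.
Lemma deltaD n x y : delta n (x + y) = delta n x + delta n y.
Proof. by apply: (@funext TNN TE) => u; rewrite fnE_add /delta; case: (pselect (n = u)) => h /=; rewrite ?addr0. Qed.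
Lemma deltaN n x : delta n (- x) = - delta n x.
Proof. by apply: (@funext TNN TE) => u; rewrite fnE_opp /delta; case: (pselect (n = u)) => h /=; rewrite ?oppr0. Qed.
Lemma delta0 n : delta n 0 = 0.
Proof. by apply: (@funext TNN TE) => u; rewrite /delta; case: (pselect (n = u)). Qed.

Definition dsum J (ws : 'I_J -> TNN) (X : 'I_J -> TE) : FN := \sum_j delta (ws j) (X j).
Definition colN L J (K : 'M[TA]_(L, J)) (ws : 'I_J -> TNN) : 'I_L -> TNN := matV K ws.

Definition Wset (f : FN) := exists J L (ws : 'I_J -> TNN) (Y : 'I_L -> TE) (K : 'M[TA]_(L, J)),
  colN K ws = (fun _ => 0) /\ f = dsum ws (rowX Y K).

Definition cat2 (T : Type) m n (F : 'I_m -> T) (G : 'I_n -> T) : 'I_(m + n) -> T :=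
  fun i => match split i with inl a => F a | inr b => G b end.
Lemma cat2l (T : Type) m n (F : 'I_m -> T) (G : 'I_n -> T) i : cat2 F G (lshift n i) = F i.
Proof. by rewrite /cat2 split_lshift. Qed.
Lemma cat2r (T : Type) m n (F : 'I_m -> T) (G : 'I_n -> T) i : cat2 F G (rshift m i) = G i.
Proof. by rewrite /cat2 split_rshift. Qed.

Lemma W0 : Wset 0.
Proof.
exists 0%N, 0%N, (fun _ => 0), (fun _ => 0), 0; split; first by apply: funext => -[].
by rewrite /dsum big_ord0.
Qed.

Lemma WB f g : Wset f -> Wset g -> Wset (f - g).
Proof.
move=> [J1 [L1 [ws1 [Y1 [K1 [h1 ->]]]]]] [J2 [L2 [ws2 [Y2 [K2 [h2 ->]]]]]].
exists (J1 + J2)%N, (L1 + L2)%N, (cat2 ws1 ws2), (cat2 Y1 (fun l => - Y2 l)),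
  (block_mx K1 0 0 K2); split.
  apply: funext => l; rewrite /colN /matV big_split_ord /=.
  case: (split_ordP l) => l' ->.
    rewrite [X in _ + X]big1 ?addr0; last by move=> j _; rewrite block_mxEur mxE scale0r.
    transitivity (colN K1 ws1 l'); last by rewrite h1.
    by apply: eq_bigr => j _; rewrite block_mxEul cat2l.
  rewrite [X in X + _]big1 ?add0r; last by move=> j _; rewrite block_mxEdl mxE scale0r.
  transitivity (colN K2 ws2 l'); last by rewrite h2.
  by apply: eq_bigr => j _; rewrite block_mxEdr cat2r.
rewrite /dsum big_split_ord /=; congr (_ + _).
  apply: eq_bigr => j _; rewrite cat2l; congr delta.
  rewrite /rowX /rowV big_split_ord /= [X in _ + X]big1 ?addr0.
    by apply: eq_bigr => l _; rewrite cat2l block_mxEul.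
  by move=> l _; rewrite block_mxEdl mxE (ra0r eaD2).
rewrite -sumrN; apply: eq_bigr => j _; rewrite cat2r -deltaN; congr delta.
rewrite /rowX /rowV big_split_ord /= [X in X + _]big1 ?add0r.
  by rewrite -sumrN; apply: eq_bigr => l _; rewrite cat2r block_mxEdr (raNl eaD1).
by move=> l _; rewrite block_mxEur mxE (ra0r eaD2).
Qed.

Lemma Wgen J (ws : 'I_J -> TNN) (k : 'I_J -> TA) (y : TE) :
  \sum_j k j *: ws j = 0 -> Wset (dsum ws (fun j => ea y (k j))).
Proof.
move=> h; exists J, 1%N, ws, (fun _ => y), (\matrix_(l, j) k j); split.
  by apply: funext => l; rewrite /colN /matV -[RHS]h; apply: eq_bigr => j _; rewrite mxE.
by rewrite /dsum; apply: eq_bigr => j _; rewrite /rowX /rowV big_ord1 mxE.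
Qed.

Lemma eaN1 (x : TE) : ea x (-1) = - x.
Proof. by rewrite (raNr eaD2) ea1. Qed.

Definition QGN := QG W0 WB.
Definition bN (x : E) (n : N) : QGN := cls Wset (delta n x).

Lemma bN_bal : balanced (vadd E) eact bN.
Proof.
split; last split.
- by move=> x y m; rewrite /bN -[vadd E x y]/((x : TE) + y) deltaD (cls_add W0 WB).
- move=> x m n; rewrite /bN /= -(cls_add W0 WB); apply/(clsP W0 WB).
  pose ws := fun j : 'I_3 => nth (0 : TNN) [:: (m : TNN) + n; m; n] j.
  pose k := fun j : 'I_3 => nth (0 : TA) [:: 1; -1; -1] j.
  have := @Wgen 3 ws k x.
  rewrite /dsum !big_ord_recl !big_ord0 /ws /k /= ea1 !eaN1 !deltaN !addr0.
  rewrite opprD; apply; rewrite scale1r !scaleN1r -opprD subrr //.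
- move=> x a m; rewrite /bN /=; apply/(clsP W0 WB).
  pose ws := fun j : 'I_2 => nth (0 : TNN) [:: (m : TNN); (a : TA) *: (m : TNN)] j.
  pose k := fun j : 'I_2 => nth (0 : TA) [:: (a : TA); -1] j.
  have := @Wgen 2 ws k x.
  rewrite /dsum !big_ord_recl !big_ord0 /ws /k /= eaN1 deltaN !addr0.
  by apply; rewrite scaleN1r subrr.
Qed.

Lemma tz_W (t : seq (E * N)) : tensor_zero (vadd E) eact t ->
  Wset (\sum_(q <- t) delta q.2 q.1).
Proof.
move=> hz; have := hz _ _ bN_bal; rewrite /bN.
rewrite (cls_sum W0 WB t (fun q : E * N => delta q.2 q.1)).
exact: cls0.
Qed.

Lemma dsum_split J (ws : 'I_(1 + J) -> TNN) (Z : 'I_(1 + J) -> TE) :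
  dsum ws Z = delta (ws (lshift J ord0)) (Z (lshift J ord0)) +
              dsum (fun j => ws (rshift 1 j)) (fun j => Z (rshift 1 j)).
Proof. by rewrite /dsum big_split_ord /= big_ord1. Qed.

Lemma fiber J (ws : 'I_J -> TNN) (Z : 'I_J -> TE) : dsum ws Z = 0 ->
  exists L (Y : 'I_L -> TE) (K : 'M[TA]_(L, J)), colN K ws = (fun _ => 0) /\ Z = rowX Y K.
Proof.
elim: J ws Z => [|J IH] ws Z hd.
  exists 0%N, (fun _ => 0), 0; split; apply: funext => -[] //.
pose i0 : 'I_(1 + J) := lshift J ord0.
pose ws' := fun j => ws (rshift 1 j : 'I_(1 + J)).
pose Z' := fun j => Z (rshift 1 j : 'I_(1 + J)).
have hd' := hd; rewrite (dsum_split (ws : 'I_(1 + J) -> TNN) Z) -/i0 -/ws' -/Z' in hd'.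
case: (pselect (exists j0, ws' j0 = ws i0)) => [[j0 ej0]|nj].
  pose Z'' := fun j => Z' j + (if j == j0 then Z i0 else 0).
  have hd'' : dsum ws' Z'' = 0.
    rewrite -hd' addrC /dsum; under eq_bigr do rewrite /Z'' deltaD; rewrite big_split /=; congr (_ + _).
    rewrite (bigD1 j0) //= eqxx big1 ?addr0 ?ej0 // => j /negbTE ->.
    exact: delta0.
  have [L' [Y' [K' [hK' hY']]]] := IH ws' Z'' hd''.
  have eul := block_mxEul (1 : 'M[TA]_1) (- delta_mx 0 j0) (0 : 'M_(L', 1)) K'.
  have eur := block_mxEur (1 : 'M[TA]_1) (- delta_mx 0 j0) (0 : 'M_(L', 1)) K'.
  have edl := block_mxEdl (1 : 'M[TA]_1) (- delta_mx 0 j0) (0 : 'M_(L', 1)) K'.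
  have edr := block_mxEdr (1 : 'M[TA]_1) (- delta_mx 0 j0) (0 : 'M_(L', 1)) K'.
  exists (1 + L')%N, (cat2 (fun _ : 'I_1 => Z i0) Y'),
    (block_mx (1 : 'M[TA]_1) (- delta_mx 0 j0) (0 : 'M_(L', 1)) K'); split.
    apply: funext => l; rewrite /colN /matV (@big_split_ord _ _ _ 1 J) /= big_ord1.
    case: (split_ordP l) => l' ->.
      rewrite eul ord1 mxE eqxx mulr1n scale1r -/i0.
      rewrite (bigD1 j0) //= eur mxE mxE !eqxx big1 ?addr0.
        by rewrite scaleN1r -/(ws' j0) ej0 subrr.
      by move=> j /negbTE hj; rewrite eur !mxE hj andbF oppr0 scale0r.
    rewrite edl mxE scale0r add0r.
    transitivity (colN K' ws' l'); last by rewrite hK'.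
    by apply: eq_bigr => j _; rewrite edr.
  apply: funext => j; rewrite /rowX /rowV (@big_split_ord _ _ _ 1 L') /= big_ord1.
  case: (@split_ordP 1 J j) => j' ->.
    rewrite cat2l eul ord1 mxE eqxx mulr1n ea1 big1 ?addr0 //.
    by move=> l _; rewrite cat2r edl mxE (ra0r eaD2).
  rewrite cat2l eur !mxE.
  have -> : Z (rshift 1 j') = Z'' j' - (if j' == j0 then Z i0 else 0) by rewrite addrK.
  rewrite hY' /rowX /rowV addrC; congr (_ + _).
    by apply: eq_bigr => l _; rewrite cat2r edr.
  by rewrite eq_sym; case: eqP => _; rewrite ?mulr1n ?mulr0n ?eaN1 ?(raNr eaD2) ?(ra0r eaD2) ?oppr0 // ea1.
have Z0 : Z i0 = 0.
  have := congr1 (fun f : FN => f (ws i0)) hd'.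
  rewrite fnE_add fnE_0 /dsum fnE_sum big1 ?addr0.
    by rewrite /delta; case: (pselect (ws i0 = ws i0)).
  by move=> j _; rewrite /delta; case: (pselect (ws' j = ws i0)) => // h; case: nj; exists j.
have hd'' : dsum ws' Z' = 0 by rewrite -hd' Z0 delta0 add0r.
have [L' [Y' [K' [hK' hY']]]] := IH ws' Z' hd''.
exists L', Y', (row_mx (0 : 'M_(L', 1)) K'); split.
  apply: funext => l; rewrite /colN /matV (@big_split_ord _ _ _ 1 J) /= big_ord1.
  rewrite (row_mxEl (0 : 'M_(L',1)) K') mxE scale0r add0r.
  transitivity (colN K' ws' l); last by rewrite hK'.
  by apply: eq_bigr => j _; rewrite (row_mxEr (0 : 'M_(L',1)) K').
apply: funext => j; case: (@split_ordP 1 J j) => j' ->.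
  rewrite ord1 -/i0 Z0 /rowX /rowV big1 // => l _.
  by rewrite (row_mxEl (0 : 'M_(L',1)) K') mxE (ra0r eaD2).
rewrite -/(Z' j') hY' /rowX /rowV; apply: eq_bigr => l _.
by rewrite (row_mxEr (0 : 'M_(L',1)) K').
Qed.
End Tensor.

Lemma part1 (Hinj : injective_lmod (vadd E') act) : flat_rmod (vadd E) eact.
Proof.
move=> M N i [iD iZ] iinj t htz G b [bD1 [bD2 bZ]].
have i0 : (i (0 : TN M) : TN N) = 0.
  by apply: (@addIr (TN N) (i (0 : TN M))); rewrite add0r -[LHS]iD; congr i; exact: (@madd0 s A M).
have isum : forall (I : Type) (r : seq I) (F : I -> TN M),
    (i (\sum_(a <- r) F a) : TN N) = \sum_(a <- r) (i (F a) : TN N).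
  by move=> I r F; apply: (big_morph i) => // u v; apply: iD.
have [J [L [ws [Y [K [hK hf]]]]]] := tz_W htz.
pose d : E * M := (v0 E, m0 s A M).
pose q := size t.
pose xs := fun k : 'I_q => ((nth d t k).1 : TE).
pose ms := fun k : 'I_q => ((nth d t k).2 : TN M).
have hf' : \sum_(k < q) delta (i (ms k)) (xs k) = dsum ws (rowX Y K).
  rewrite -hf big_map (big_nth d) big_mkord; apply: eq_bigr => k _ //.
pose Zf := cat2 xs (fun j => - rowX Y K j).
pose wsf := cat2 (fun k => (i (ms k) : TN N)) ws.
have hZ : dsum wsf Zf = 0.
  rewrite /dsum big_split_ord /=.
  under eq_bigr do rewrite /wsf /Zf !cat2l.
  under [X in _ + X]eq_bigr do rewrite /wsf /Zf !cat2r deltaN.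
  by rewrite sumrN hf' subrr.
have [L2 [Y2 [K2 [hK2 hY2]]]] := fiber hZ.
pose KK := col_mx K2 (row_mx (0 : 'M[TA]_(L, q)) K).
pose YY := cat2 Y2 Y.
have hKK : forall l, \sum_(k < q) KK l (lshift J k) *: (i (ms k) : TN N)
     + \sum_(j < J) KK l (rshift q j) *: ws j = 0.
  move=> l; case: (split_ordP l) => l' ->.
    transitivity (colN K2 wsf l'); last by rewrite hK2.
    rewrite /colN /matV big_split_ord /=; congr (_ + _); apply: eq_bigr => j _.
      by rewrite /KK col_mxEu /wsf cat2l.
    by rewrite /KK col_mxEu /wsf cat2r.
  transitivity (colN K ws l'); last by rewrite hK.
  rewrite big1 ?add0r; last by move=> k _; rewrite /KK col_mxEd (row_mxEl (0 : 'M[TA]_(L, q)) K) mxE scale0r.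
  by apply: eq_bigr => j _; rewrite /KK col_mxEd (row_mxEr (0 : 'M[TA]_(L, q)) K).
have hYY : forall c, rowX YY KK c = cat2 xs (fun _ => 0) c.
  move=> c; rewrite /rowX /rowV big_split_ord /=.
  under eq_bigr do rewrite /YY cat2l col_mxEu.
  under [X in _ + X]eq_bigr do rewrite /YY cat2r col_mxEd.
  have -> : \sum_(l < L2) ea (Y2 l) (K2 l c) = Zf c.
    by rewrite hY2.
  case: (split_ordP c) => c' ->.
    rewrite /Zf !cat2l big1 ?addr0 // => l _.
    by rewrite (row_mxEl (0 : 'M[TA]_(L, q)) K) mxE (ra0r eaD2).
  rewrite /Zf !cat2r addrC.
  under eq_bigr do rewrite (row_mxEr (0 : 'M[TA]_(L, q)) K).
  by rewrite subrr.
pose K1 := lsubmx KK. pose Kx := rsubmx KK.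
have hx0 : rowX YY Kx = fun _ => 0.
  apply: funext => j; have := hYY (rshift q j); rewrite cat2r => <-.
  by rewrite /rowX /rowV; apply: eq_bigr => l _; rewrite mxE.
have [m3 [S [z [SKx hz]]]] := star Hinj hx0.
pose R := S *m K1.
have hxs : xs = rowX z R.
  apply: funext => k; rewrite /R -rowE_mul -hz.
  have := hYY (lshift J k); rewrite cat2l => <-.
  by rewrite /rowX /rowV /K1; under [RHS]eq_bigr do rewrite mxE.
have hrel : forall l, \sum_(k < q) R l k *: (ms k) = 0.
  move=> l; apply: iinj; rewrite i0 isum.
  under eq_bigr do rewrite iZ.
  have e1 : \sum_(k < q) R l k *: (i (ms k) : TN N) = colN S (colN K1 (fun k => i (ms k))) l.
    by rewrite /colN -matV_mul.
  rewrite [LHS]e1.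
  have -> : colN K1 (fun k => i (ms k)) = fun l' => - colN Kx ws l'.
    apply: funext => l'; apply/eqP; rewrite -subr_eq0 opprK; apply/eqP.
    by rewrite -(hKK l') /colN /matV; congr (_ + _); apply: eq_bigr => k _; rewrite mxE.
  by rewrite /colN matVN -matV_mul SKx matV0 /= oppr0.
have b0r : forall x : E, (b x (m0 s A M) : TG G) = 0.
  move=> x; apply: (@addIr (TG G) (b x (m0 s A M))); rewrite add0r.
  by rewrite -[in RHS](@madd0 s A M (m0 s A M)) bD2.
have bsuml : forall (I : Type) (r : seq I) (F : I -> TE) (mm : M),
    (b (\sum_(a <- r) F a) mm : TG G) = \sum_(a <- r) (b (F a) mm : TG G).
  move=> I r F mm; apply: (big_morph (fun x => b x mm)) => [u v|]; first exact: bD1.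
  apply: (@addIr (TG G) (b (v0 E) mm)); rewrite add0r -[in RHS](@vadd0 s E (v0 E)).
  by rewrite bD1.
have bsumr : forall (I : Type) (r : seq I) (F : I -> TN M) (x : E),
    (b x (\sum_(a <- r) F a) : TG G) = \sum_(a <- r) (b x (F a) : TG G).
  by move=> I r F x; apply: (big_morph (b x)) => [u v|]; [exact: bD2 | exact: b0r].
rewrite gsum_big (big_nth d) big_mkord.
transitivity (\sum_(k < q) (b (xs k) (ms k) : TG G)); first by [].
rewrite hxs /rowX /rowV.
under eq_bigr do rewrite bsuml.
rewrite exchange_big /=.
under eq_bigr do under eq_bigr do rewrite bZ.
rewrite big1 // => l _.
by rewrite -bsumr hrel b0r.
Qed.

Lemma row_sum_delta c b (P : 'M[TA]_(b, c)) (k : 'I_b) :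
  row k P = \sum_j P k j *: (delta_mx 0 j : 'rV[TA]_c).
Proof.
apply/rowP => l; rewrite summxE (bigD1 l) //= !mxE !eqxx mulr1 big1 ?addr0 // => j /negbTE hj.
by rewrite !mxE eq_sym hj mulr0.
Qed.

Lemma flat_exact (Hf : flat_rmod (vadd E) eact) a b c (Q : 'M[TA]_(a, b)) (P : 'M[TA]_(b, c)) :
  (forall r : 'rV_b, r *m P = 0 -> exists x : 'rV_a, r = x *m Q) ->
  forall x : 'I_b -> TE, rowX x P = (fun _ => 0) -> exists z, x = rowX z Q.
Proof.
move=> hex x hx.
pose M := ImgLMod P; pose N := RowLMod A c.
have hk : forall k : 'I_b, exists r : 'rV_b, row k P = r *m P.
  by move=> k; exists (delta_mx 0 k); rewrite -rowE.
pose em (k : 'I_b) : M := exist _ (row k P) (hk k).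
pose t := [seq ((x k : E), em k) | k <- index_enum 'I_b].
have ht : tensor_zero (vadd E) eact [seq (q.1, incl q.2) | q <- t].
  move=> G be [bD1 [bD2 bZ]].
  have b0l : forall v : N, (be (v0 E) v : TG G) = 0.
    move=> v; apply: (@addIr (TG G) (be (v0 E) v)); rewrite add0r.
    by rewrite -[in RHS](@vadd0 s E (v0 E)) bD1.
  have b0r : forall x' : E, (be x' (0 : 'rV[TA]_c) : TG G) = 0.
    move=> x'; apply: (@addIr (TG G) (be x' 0)); rewrite add0r.
    have h := bD2 x' (0 : 'rV[TA]_c) 0.
    have e0 : madd s A N (0 : 'rV[TA]_c) 0 = 0 by exact: (addr0 (0 : 'rV[TA]_c)).
    rewrite e0 in h; exact: (esym h).
  have bsuml : forall (I : Type) (r : seq I) (F : I -> TE) (v : N),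
      (be (\sum_(i <- r) F i) v : TG G) = \sum_(i <- r) (be (F i) v : TG G).
    by move=> I r F v; apply: (big_morph (fun x => be x v)) => [u w|]; [exact: bD1|exact: b0l].
  have bsumr : forall (I : Type) (r : seq I) (F : I -> 'rV[TA]_c) (x' : E),
      (be x' (\sum_(i <- r) F i) : TG G) = \sum_(i <- r) (be x' (F i) : TG G).
    by move=> I r F x'; apply: (big_morph (be x')) => [u w|]; [exact: bD2|exact: b0r].
  rewrite gsum_big -map_comp big_map /=.
  transitivity (\sum_k (be (x k) (row k P) : TG G)); first by [].
  under eq_bigr do rewrite row_sum_delta bsumr.
  rewrite exchange_big /=.
  under eq_bigr do under eq_bigr do rewrite -[_ *: _]/(mact s A N _ _) -bZ.
  rewrite big1 // => j _; rewrite -bsuml.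
  have := congr1 (fun f => f j) hx; rewrite /rowX /rowV /= => ->.
  exact: b0l.
have htM := Hf M N (@incl s A c b P) (incl_lin P) (@incl_inj s A c b P) t ht.
pose V (w : 'rV[TE]_b) := exists z : 'I_a -> TE, forall k, w 0 k = rowX z Q k.
have V0 : V 0 by exists (fun _ => 0) => k; rewrite rowE0 mxE.
have VB : forall u w, V u -> V w -> V (u - w).
  move=> u w [z1 h1] [z2 h2]; exists (fun l => z1 l - z2 l) => k.
  by rewrite !mxE h1 h2 rowE_add rowEN.
pose G := QG V0 VB.
pose rep (v : M) : 'rV[TA]_b := sval (cid (proj2_sig v)).
have repE : forall v : M, sval v = rep v *m P by move=> v; rewrite /rep; case: cid.
pose bb (x' : E) (v : M) : G := cls V (\row_k ea x' (rep v 0 k)).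
have wd : forall (x' : E) (v : M) (r : 'rV_b), sval v = r *m P ->
    bb x' v = cls V (\row_k ea x' (r 0 k)).
  move=> x' v r hr; rewrite /bb; apply/(clsP V0 VB).
  have [c' hc'] : exists c', rep v - r = c' *m Q.
    by apply: hex; rewrite mulmxBl -repE -hr subrr.
  exists (fun l => ea x' (c' 0 l)) => k.
  rewrite !mxE -(raNr eaD2) -eaD2.
  have -> : rep v 0 k - r 0 k = (rep v - r) 0 k by rewrite !mxE.
  rewrite hc' mxE (ra_sumr eaD2) /rowX /rowV; apply: eq_bigr => l _.
  by rewrite eaM.
have bbal : balanced (vadd E) eact bb.
  split; last split.
  - move=> x1 x2 v; rewrite /bb /G /= -(cls_add V0 VB); congr cls.
    by apply/rowP => k; rewrite !mxE eaD1.
  - move=> x' u v; rewrite (wd x' _ (rep u + rep v)); last by rewrite /= !repE mulmxDl.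
    rewrite /bb /G /= -(cls_add V0 VB); congr cls.
    by apply/rowP => k; rewrite !mxE eaD2.
  - move=> x' a' v; rewrite (wd x' _ ((a' : TA) *: rep v)); last by rewrite /= repE scalemxAl.
    rewrite /bb; congr cls; apply/rowP => k; rewrite !mxE eaM //.
have := htM G bb bbal.
rewrite /t -map_comp.
have -> : [seq ((fun p : E * M => bb p.1 p.2) \o (fun k : 'I_b => ((x k : E), em k))) k
            | k <- index_enum 'I_b] =
    [seq (cls V (\row_l ea (x k) ((delta_mx 0 k : 'rV[TA]_b) 0 l)) : G) | k <- index_enum 'I_b].
  by apply: eq_map => k /=; rewrite (wd _ _ (delta_mx 0 k)) //= -rowE.
rewrite (cls_sum V0 VB) => /(@cls0 _ V V0 VB _) [z hz].
exists z; apply: funext => l; rewrite -hz summxE (bigD1 l) //= !mxE !eqxx ea1.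
rewrite big1 ?addr0 // => k /negbTE hk'.
by rewrite !mxE eq_sym hk' (ra0r eaD2).
Qed.

Lemma exactA_mx a b c (P : 'I_a -> 'I_b -> A) (Q : 'I_b -> 'I_c -> A) :
  exactA P Q -> forall r : 'rV[TA]_b, r *m mxA Q = 0 <-> exists x : 'rV_a, r = x *m mxA P.
Proof.
move=> h r.
have eA : forall m n (y : 'I_m -> A) (R : 'I_m -> 'I_n -> A) j,
    rowmulA y R j = ((\row_i (y i : TA)) *m mxA R) 0 j.
  by move=> m n y R j; rewrite !mxE; apply: eq_bigr => i _; rewrite !mxE.
have rr : forall n (u : 'rV[TA]_n), \row_i (u 0 i) = u by move=> n u; apply/rowP => i; rewrite mxE.
have hr := h (fun j => r 0 j).
split.
  move=> h0; have hz : forall j, rowmulA (fun j => r 0 j) Q j = a0 A.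
    by move=> j; rewrite eA rr h0 mxE.
  have [x hx] := (proj1 hr) hz; exists (\row_i (x i : TA)); apply/rowP => j.
  by rewrite hx eA.
move=> [x ex]; rewrite ex in hr *.
have hz : exists x', forall j, (x *m mxA P) 0 j = rowmulA x' P j.
  by exists (fun i => x 0 i) => j; rewrite eA rr.
have := (proj2 hr) hz => h1; apply/rowP => j.
by have := h1 j; rewrite eA rr => ->; rewrite mxE.
Qed.

Lemma colY_scal m n (c : TK s) (P : 'M[TA]_(m, n)) (y : 'I_n -> TE') :
  colY P (fun j => vscal E' c (y j)) = fun i => vscal E' c (colY P y i).
Proof.
apply: funext => i; rewrite /colY /matV.
under eq_bigr do rewrite [_ *: _]act_scal.
apply/esym; apply: (big_morph (vscal E' c)) => [u v|]; first exact: vscalDr.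
by apply: ndr => x; rewrite ppZr pp0r mulr0.
Qed.

Lemma colY_add m n (P : 'M[TA]_(m, n)) (y z : 'I_n -> TE') :
  colY P (fun j => y j + z j) = fun i => colY P y i + colY P z i.
Proof. exact: matV_add. Qed.

Lemma part2_core (Hf : flat_rmod (vadd E) eact) k0 k1 k2 k3
  (P0 : 'M[TA]_(k0, k1)) (P1 : 'M[TA]_(k1, k2)) (P2 : 'M[TA]_(k2, k3)) :
  (forall r : 'rV_k1, r *m P1 = 0 <-> exists x : 'rV_k0, r = x *m P0) ->
  (forall r : 'rV_k2, r *m P2 = 0 <-> exists x : 'rV_k1, r = x *m P1) ->
  forall y : 'I_k1 -> TE', colY P0 y = (fun _ => 0) -> exists z, y = colY P1 z.
Proof.
move=> ex1 ex2 y hy.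
have P1P2 : P1 *m P2 = 0.
  apply/row_matrixP => i; rewrite row_mul row0; apply/(ex2 _).
  by exists (delta_mx 0 i); rewrite -rowE.
case: k1 P0 P1 P2 ex1 ex2 y hy P1P2 => [|k1] P0 P1 P2 ex1 ex2 y hy P1P2.
  by exists (fun _ => 0); apply: funext => -[].
case: k2 P1 P2 ex1 ex2 P1P2 => [|k2] P1 P2 ex1 ex2 P1P2.
  exists (fun _ => 0); apply: funext => i.
  have [x hx] := (proj1 (ex1 (delta_mx 0 i))) (thinmx0 _).
  have := dot_delta i y; rewrite hx dot_mul hy dot_y0 => <-.
  by rewrite /colY /matV big_ord0.
have clX : weak_closed (@pairn s E E' p k2.+1)
    (fun z => exists x, forall j, z j = rowmulE eact x (fun i j => P1 i j) j).
  have -> : (fun z : 'I_k2.+1 -> E => exists x, forall j, z j = rowmulE eact x (fun i j => P1 i j) j)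
      = (fun z => rowX z P2 = fun _ => 0).
    apply: funext => z; apply: propext; split.
      move=> [x hx]; have -> : z = rowX x P1.
        by apply: funext => j; rewrite hx rowmulE_eq mxA_id.
      by rewrite rowE_mul P1P2 rowE0r.
    move=> h; have [x hx] := flat_exact Hf (fun r hr => (proj1 (ex2 r)) hr) h.
    by exists x => j; rewrite hx rowmulE_eq mxA_id.
  exact: ker_rowE_closed.
have clY := (proj1 (HK (ltn0Sn k1) (ltn0Sn k2) (fun i j => P1 i j))) clX.
have [z hz] : exists z, forall i, y i = matmulE' act (fun i j => P1 i j) z i.
  apply: contrapT => nV.
  have V0 : exists z, forall i, (fun _ => v0 E') i = matmulE' act (fun i j => P1 i j) z i.
    by exists (fun _ => 0 : TE') => i; rewrite matmulE_eq /colY matV0r.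
  have Vl : forall a (u v : 'I_k1.+1 -> E'),
      (exists z, forall i, u i = matmulE' act (fun i j => P1 i j) z i) ->
      (exists z, forall i, v i = matmulE' act (fun i j => P1 i j) z i) ->
      (exists z, forall i, vadd E' (vscal E' a (u i)) (v i) = matmulE' act (fun i j => P1 i j) z i).
    move=> a u v [zu hu] [zv hv]; exists (fun j => vadd E' (vscal E' a (zu j)) (zv j)) => i.
    by rewrite matmulE_eq colY_add colY_scal -!matmulE_eq hu hv.
  have [x [xV xy]] := @bipolar s _ _ (fun (y : 'I_k1.+1 -> E') (x : 'I_k1.+1 -> E) => pairn p x y)
    (fun _ => v0 E') (fun x u i => vadd E' (x i) (u i)) (fun c x i => vscal E' c (x i))
    (fun _ => v0 E) (fun y u i => vadd E (y i) (u i)) (fun c y i => vscal E c (y i))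
    (fun y => pairn0r y) (fun x u y => pairnDr y x u) (fun c x y => pairnZr c y x)
    (fun x => pairn0l x) (fun x y u => pairnDl y u x) (fun c x y => pairnZl c y x)
    _ V0 Vl clY y nV.
  have hxP : rowX x P1 = fun _ => 0.
    apply: pairn_ndl => w; rewrite transp; apply: xV.
    by exists w => i; rewrite matmulE_eq mxA_id.
  have [w hw] := flat_exact Hf (fun r hr => (proj1 (ex1 r)) hr) hxP.
  by apply: xy; rewrite hw transp hy pairn0r.
by exists z; apply: funext => i; rewrite hz matmulE_eq mxA_id.
Qed.

Lemma part2 (Hf : flat_rmod (vadd E) eact) : n_injective act 1.
Proof.
move=> ks Ps hex.
have e1 := exactA_mx (hex 0%N isT).
have e2 := exactA_mx (hex 1%N isT).
move=> y; split.
  move=> h.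
  have hy : colY (mxA (Ps 0%N)) y = fun _ => 0 by apply: funext => i; rewrite -matmulE_eq h.
  have [z hz] := part2_core Hf e1 e2 hy.
  by exists z => j; rewrite hz matmulE_eq.
move=> [z hz] i.
have P0P1 : mxA (Ps 0%N) *m mxA (Ps 1%N) = 0.
  apply/row_matrixP => k; rewrite row_mul row0; apply/(e1 _).
  by exists (delta_mx 0 k); rewrite -rowE.
have -> : y = colY (mxA (Ps 1%N)) z by apply: funext => j; rewrite hz matmulE_eq.
by rewrite matmulE_eq /colY -matV_mul P0P1 matV0.
Qed.
End Main.

Theorem theorem1 (s : scalars) (A : Alg s) (HA : noetherian_domain A)
  (E E' : VS s) (p : E -> E' -> K s)
  (Hbil : bilinear p) (Hnd : nondegenerate p)
  (act : A -> E' -> E') (Hact : lmod_action act)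
  (Hsemi : forall a : A, weak_continuous (fun (y : E') (x : E) => p x y) (act a))
  (eact : E -> A -> E)
  (Hadj : forall (x : E) (a : A) (y : E'), p (eact x a) y = p x (act a y))
  (HK : Kothe p act eact) :
  (injective_lmod (vadd E') act -> flat_rmod (vadd E) eact) /\
  (flat_rmod (vadd E) eact -> n_injective act 1).
Proof.
split.
  by move=> Hinj; apply: (part1 Hbil Hnd Hact Hadj HK (proj1 (proj2 HA)) Hinj).
by move=> Hf; apply: (part2 Hbil Hnd Hact Hadj HK Hf).
Qed.
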